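(* For $h_0$ fixed, there exist positive numbers $T_X$, $\varepsilon_0$ and $C$ such that for every $t\in[0,T_X]$, $\varepsilon\in(0,\varepsilon_0]$ and $i\in\{1,\dots,N\}$, the points $X_i^\varepsilon(t)$ and $\tilde X^\varepsilon_i(t)$ are defined and $$X_i^\varepsilon(t),\ \tilde X_i^\varepsilon(t)\in\mathcal A^{X^\varepsilon_{i,0,r}}_\varepsilon(d_0,h_0)\quad\text{and}\quad|X_i^\varepsilon(t)-\tilde X_i^\varepsilon(t)|\le\frac{C}{|\ln\varepsilon|}.$$
   Context: $\mathbb{R}^2_+=\{x=(x_z,x_r):x_r>0\}$, $e_z=(1,0)$, $(a_z,a_r)^\perp=(-a_r,a_z)$. Data: $N\ge2$, $X^*=(z^*,r^* )\in\mathbb{R}^2_+$, $Y_{1,0},\dots,Y_{N,0}\in\mathbb{R}^2$ with pairwise distinct radial components $Y_{i,0,r}$, $\gamma>0$, $h_0>0$; $d_0=\frac14\min_{j\ne k}|Y_{j,0,r}-Y_{k,0,r}|$; for $\varepsilon\in(0,1)$, $X^\varepsilon_{i,0}=X^*+Y_{i,0}/\sqrt{|\ln\varepsilon|}$ and $\mathcal A^{r_0}_\varepsilon(d,h)=\{(z,r):|r-r_0|\le d/\sqrt{|\ln\varepsilon|},\ |z-z^*|\le h\}$. $(X^\varepsilon_i)_i$ solves $\frac{d}{dt}X_i^\varepsilon=\frac{\gamma}{4\pi X^\varepsilon_{i,r}}e_z+\frac{\gamma}{2\pi|\ln\varepsilon|}\sum_{j\neq i}\frac{(X_i^\varepsilon-X_j^\varepsilon)^\perp}{|X_i^\varepsilon-X_j^\varepsilon|^2}$,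 $X_i^\varepsilon(0)=X^\varepsilon_{i,0}$. $(\tilde Y_i)_i$ solves $\frac{d}{dt}\tilde Y_i=\frac{\gamma}{2\pi}\sum_{j\ne i}\frac{(\tilde Y_i-\tilde Y_j)^\perp}{|\tilde Y_i-\tilde Y_j|^2}-\frac{\gamma}{4\pi(r^* )^2}\tilde Y_{i,r}e_z$, $\tilde Y_i(0)=Y_{i,0}$, and $\tilde X_i^\varepsilon(t)=X^*+\frac{\gamma}{4\pi r^*}te_z+\frac{1}{\sqrt{|\ln\varepsilon|}}\tilde Y_i(t)$. *)

(* Defs.v *)
From Stdlib Require Import Reals Lra List.
From Coquelicot Require Import Coquelicot.
Open Scope R_scope.

(* Points of R^2 are pairs (z, r). Vortex indices are 0 .. N-1
   (paper's 1 .. N shifted by one). *)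

Fixpoint sumR (n : nat) (f : nat -> R) : R :=
  match n with O => 0 | S m => sumR m f + f m end.

Definition sum_ne (N i : nat) (f : nat -> R) : R :=
  sumR N (fun j => if Nat.eqb j i then 0 else f j).

Definition sqnorm (a : R * R) : R := fst a ^ 2 + snd a ^ 2.
Definition dist2 (a b : R * R) : R := sqrt ((fst a - fst b) ^ 2 + (snd a - snd b) ^ 2).

(* minimum of a non-empty list (0 for the empty list, never used) *)
Definition listmin (l : list R) : R :=
  match l with nil => 0 | x :: t => fold_right Rmin x t end.

Definition d0 (N : nat) (Y0 : nat -> R * R) : R :=
  / 4 * listmin
    (flat_map (fun j =>
       flat_map (fun k => if Nat.eqb j k then nil
                          else Rabs (snd (Y0 j) - snd (Y0 k)) :: nil)
                (seq 0 N)) (seq 0 N)).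

Definition lnabs (eps : R) : R := Rabs (ln eps).

(* membership in A_eps^{r0}(d,h) with reference axial coordinate z* *)
Definition inA (zs eps r0 d h : R) (x : R * R) : Prop :=
  Rabs (snd x - r0) <= d / sqrt (lnabs eps) /\ Rabs (fst x - zs) <= h.

Definition F_X (N : nat) (gamma eps : R) (X : nat -> R * R) (i : nat) : R * R :=
  ( gamma / (4 * PI * snd (X i))
    + gamma / (2 * PI * lnabs eps) *
      sum_ne N i (fun j => - (snd (X i) - snd (X j)) /
                            sqnorm (fst (X i) - fst (X j), snd (X i) - snd (X j))),
    gamma / (2 * PI * lnabs eps) *
      sum_ne N i (fun j => (fst (X i) - fst (X j)) /
                            sqnorm (fst (X i) - fst (X j), snd (X i) - snd (X j))) ).

Definition F_Y (N : nat) (gamma rs : R) (Y : nat -> R * R) (i : nat) : R * R :=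
  ( gamma / (2 * PI) *
      sum_ne N i (fun j => - (snd (Y i) - snd (Y j)) /
                            sqnorm (fst (Y i) - fst (Y j), snd (Y i) - snd (Y j)))
    - gamma / (4 * PI * rs ^ 2) * snd (Y i),
    gamma / (2 * PI) *
      sum_ne N i (fun j => (fst (Y i) - fst (Y j)) /
                            sqnorm (fst (Y i) - fst (Y j), snd (Y i) - snd (Y j))) ).

(* admissible configurations (vector field well defined) *)
Definition no_collision (N : nat) (X : nat -> R * R) : Prop :=
  forall i j, (i < N)%nat -> (j < N)%nat -> i <> j -> X i <> X j.

Definition ok_X (N : nat) (X : nat -> R * R) : Prop :=
  no_collision N X /\ forall i, (i < N)%nat -> 0 < snd (X i).

Definition cont_on (T : R) (f : R -> R) : Prop :=
  forall t, 0 <= t <= T -> forall e, 0 < e -> exists del, 0 < del /\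
    forall s, 0 <= s <= T -> Rabs (s - t) < del -> Rabs (f s - f t) < e.

Definition is_sol (N : nat) (T : R) (ok : (nat -> R * R) -> Prop)
    (F : (nat -> R * R) -> nat -> R * R) (x0 : nat -> R * R)
    (X : nat -> R -> R * R) : Prop :=
  (forall i, (i < N)%nat -> X i 0 = x0 i) /\
  (forall t, 0 <= t <= T -> ok (fun j => X j t)) /\
  (forall i, (i < N)%nat ->
     cont_on T (fun s => fst (X i s)) /\ cont_on T (fun s => snd (X i s))) /\
  (forall i, (i < N)%nat -> forall t, 0 < t < T ->
     is_derive (fun s => fst (X i s)) t (fst (F (fun j => X j t) i)) /\
     is_derive (fun s => snd (X i s)) t (snd (F (fun j => X j t) i))).

Definition X0eps (zs rs eps : R) (Y0 : nat -> R * R) (i : nat) : R * R :=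
  (zs + fst (Y0 i) / sqrt (lnabs eps), rs + snd (Y0 i) / sqrt (lnabs eps)).

Definition Xtilde (zs rs gamma eps : R) (Yt : nat -> R -> R * R) (i : nat) (t : R) : R * R :=
  (zs + gamma / (4 * PI * rs) * t + fst (Yt i t) / sqrt (lnabs eps),
   rs + snd (Yt i t) / sqrt (lnabs eps)).

(* Main.v *)
Require Import Defs.
From Stdlib Require Import Reals Lra List Arith Lia Classical FunctionalExtensionality.
From Coquelicot Require Import Coquelicot.
Open Scope R_scope.

Lemma INR_le_pow2 n : INR n <= 2 ^ n.
Proof.
  induction n as [|n IH]; [simpl; lra|].
  rewrite S_INR. simpl. assert (1 <= 2 ^ n) by (apply pow_R1_Rle; lra). lra.
Qed.

Lemma le_pow2_0 x K : (forall n, x <= K / 2 ^ n) -> x <= 0.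
Proof.
  intros H. destruct (Rle_dec x 0) as [h|h]; [exact h|exfalso].
  assert (hx : 0 < x) by lra.
  destruct (INR_archimed x K hx) as [n hn].
  specialize (H n). assert (hp : 0 < 2 ^ n) by (apply pow_lt; lra).
  assert (x * 2 ^ n <= K).
  { apply (Rmult_le_compat_r (2^n)) in H; [|lra].
    unfold Rdiv in H. rewrite Rmult_assoc, Rinv_l in H; lra. }
  pose proof (INR_le_pow2 n). nra.
Qed.

Lemma cont_on_ext T f g : (forall t, 0 <= t <= T -> f t = g t) -> cont_on T f -> cont_on T g.
Proof.
  intros E H t ht e he. destruct (H t ht e he) as [d [hd Hd]].
  exists d; split; auto. intros s hs hst. rewrite <- !E by auto. auto.
Qed.

Lemma cont_on_affine T f p q c : cont_on T f -> cont_on T (fun u => p + q * u + c * f u).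
Proof.
  intros H t ht e he.
  destruct (H t ht (e / (2 * (Rabs c + 1)))) as [d [hd Hd]].
  { apply Rdiv_lt_0_compat; [lra|]. pose proof (Rabs_pos c); lra. }
  exists (Rmin d (e / (2 * (Rabs q + 1)))). split.
  { apply Rmin_pos; auto. apply Rdiv_lt_0_compat; [lra|]. pose proof (Rabs_pos q); lra. }
  intros s hs hst.
  assert (h1 : Rabs (s - t) < d) by (eapply Rlt_le_trans; [exact hst|apply Rmin_l]).
  assert (h2 : Rabs (s - t) < e / (2 * (Rabs q + 1))) by (eapply Rlt_le_trans; [exact hst|apply Rmin_r]).
  specialize (Hd s hs h1).
  replace (p + q * s + c * f s - (p + q * t + c * f t)) with (q * (s - t) + c * (f s - f t)) by ring.
  eapply Rle_lt_trans; [apply Rabs_triang|]. rewrite !Rabs_mult.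
  pose proof (Rabs_pos q). pose proof (Rabs_pos c). pose proof (Rabs_pos (s-t)). pose proof (Rabs_pos (f s - f t)).
  assert (Rabs q * Rabs (s - t) <= e/2).
  { apply Rmult_lt_compat_l with (r := Rabs q + 1) in h2; [|lra].
    replace ((Rabs q + 1) * (e / (2 * (Rabs q + 1)))) with (e/2) in h2 by (field; lra). nra. }
  assert (Rabs c * Rabs (f s - f t) <= e/2).
  { apply Rmult_lt_compat_l with (r := Rabs c + 1) in Hd; [|lra].
    replace ((Rabs c + 1) * (e / (2 * (Rabs c + 1)))) with (e/2) in Hd by (field; lra). nra. }
  destruct (Req_dec q 0) as [->|hq].
  - rewrite Rabs_R0. destruct (Req_dec c 0) as [->|hc]; [rewrite Rabs_R0; lra|].
    assert (0 < Rabs c) by (apply Rabs_pos_lt; auto).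
    apply Rmult_lt_compat_l with (r := Rabs c + 1) in Hd; [|lra].
    replace ((Rabs c + 1) * (e / (2 * (Rabs c + 1)))) with (e/2) in Hd by (field; lra). nra.
  - assert (0 < Rabs q) by (apply Rabs_pos_lt; auto).
    apply Rmult_lt_compat_l with (r := Rabs q + 1) in h2; [|lra].
    replace ((Rabs q + 1) * (e / (2 * (Rabs q + 1)))) with (e/2) in h2 by (field; lra). nra.
Qed.

Lemma cont_on_lip T f K : 0 <= K -> (forall s t, 0 <= s <= T -> 0 <= t <= T -> Rabs (f s - f t) <= K * Rabs (s - t)) -> cont_on T f.
Proof.
  intros hK H t ht e he. exists (e / (K + 1)). split.
  { apply Rdiv_lt_0_compat; lra. }
  intros s hs hst. eapply Rle_lt_trans; [apply H; auto|].
  apply Rmult_lt_compat_l with (r := K + 1) in hst; [|lra].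
  replace ((K + 1) * (e / (K + 1))) with e in hst by (field; lra).
  pose proof (Rabs_pos (s - t)). nra.
Qed.

Lemma lip_continuous f t K : (forall s, Rabs (f s - f t) <= K * Rabs (s - t)) -> continuous f t.
Proof.
  intros H. apply filterlim_locally. intros eps.
  assert (hK : 0 <= K).
  { specialize (H (t+1)). replace (t + 1 - t) with 1 in H by ring. rewrite Rabs_R1 in H.
    pose proof (Rabs_pos (f (t+1) - f t)). lra. }
  assert (hp : 0 < eps / (K + 1)) by (apply Rdiv_lt_0_compat; [apply cond_pos|lra]).
  exists (mkposreal _ hp). intros y hy. simpl in hy.
  change (Rabs (f y - f t) < eps). unfold ball in hy; simpl in hy. unfold AbsRing_ball in hy. simpl in hy.
  change (Rabs (y - t) < eps / (K + 1)) in hy.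
  eapply Rle_lt_trans; [apply H|].
  apply Rmult_lt_compat_l with (r := K + 1) in hy; [|lra].
  replace ((K + 1) * (eps / (K + 1))) with (pos eps) in hy by (field; lra).
  pose proof (Rabs_pos (y - t)). nra.
Qed.

Lemma fin_delta (N : nat) (Q : nat -> R -> Prop) :
  (forall i d d', 0 < d' <= d -> Q i d -> Q i d') ->
  (forall i, (i < N)%nat -> exists d, 0 < d /\ Q i d) ->
  exists d, 0 < d /\ forall i, (i < N)%nat -> Q i d.
Proof.
  intros Hm. induction N as [|N IH]; intros H.
  - exists 1. split; [lra|]. intros i hi; lia.
  - destruct IH as [d1 [hd1 H1]]. { intros i hi; apply H; lia. }
    destruct (H N ltac:(lia)) as [d2 [hd2 H2]].
    exists (Rmin d1 d2). split; [apply Rmin_pos; auto|].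
    intros i hi. destruct (Nat.eq_dec i N) as [->|hne].
    + apply (Hm N d2); auto. split; [apply Rmin_pos; auto|apply Rmin_r].
    + apply (Hm i d1); auto. split; [apply Rmin_pos; auto|apply Rmin_l]. apply H1; lia.
Qed.

Definition goodP (N : nat) (B : R) (a b : nat -> R -> R) (s : R) : Prop :=
  forall i, (i < N)%nat -> Rabs (a i s) <= B /\ Rabs (b i s) <= B.

Lemma cont_ind (N : nat) (T B B' : R) (a b : nat -> R -> R) :
  0 <= T -> B' < B ->
  (forall i, (i < N)%nat -> cont_on T (a i) /\ cont_on T (b i)) ->
  (forall i, (i < N)%nat -> Rabs (a i 0) < B /\ Rabs (b i 0) < B) ->
  (forall t, 0 <= t <= T -> (forall s, 0 <= s <= t -> goodP N B a b s) -> goodP N B' a b t) ->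
  forall t, 0 <= t <= T -> goodP N B' a b t.
Proof.
  intros hT hB Hc H0 Hstep.
  set (E := fun t => 0 <= t <= T /\ forall s, 0 <= s <= t -> goodP N B a b s).
  assert (E0 : E 0).
  { split; [lra|]. intros s hs i hi. replace s with 0 by lra. destruct (H0 i hi); split; lra. }
  destruct (completeness E) as [S [HS1 HS2]].
  { exists T. intros x [hx _]. lra. }
  { exists 0; exact E0. }
  assert (hS0 : 0 <= S) by (apply HS1; exact E0).
  assert (hST : S <= T) by (apply HS2; intros x [hx _]; lra).
  assert (C1 : forall s, 0 <= s < S -> goodP N B a b s).
  { intros s hs. destruct (classic (exists t, E t /\ s < t)) as [[t [[ht1 ht2] hst]]|hn].
    - apply ht2. lra.
    - exfalso. assert (S <= s); [|lra]. apply HS2. intros x hx.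
      destruct (Rle_dec x s) as [h|h]; auto. exfalso; apply hn. exists x; split; auto; lra. }
  assert (C2 : goodP N B a b S).
  { intros i hi.
    assert (key : forall f : R -> R, cont_on T f -> Rabs (f 0) < B ->
                  (forall s, 0 <= s < S -> Rabs (f s) <= B) -> Rabs (f S) <= B).
    { intros f hf hf0 hfs. destruct (Rle_dec (Rabs (f S)) B) as [h|h]; auto. exfalso.
      destruct (hf S (conj hS0 hST) (Rabs (f S) - B)) as [d [hd Hd]]; [lra|].
      destruct (Req_dec S 0) as [e|e].
      - rewrite e in h. lra.
      - set (s := Rmax 0 (S - d/2)).
        assert (hs1 : 0 <= s) by apply Rmax_l.
        assert (hs2 : s < S) by (unfold s; apply Rmax_lub_lt; lra).
        assert (hs3 : Rabs (s - S) < d).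
        { unfold s. apply Rmax_case_strong; intros; rewrite Rabs_left; lra. }
        specialize (Hd s ltac:(lra) hs3). specialize (hfs s ltac:(lra)).
        revert Hd hfs h. split_Rabs; lra. }
    destruct (Hc i hi) as [ca cb]. destruct (H0 i hi) as [a0 b0].
    split; apply key; auto; intros s hs; destruct (C1 s hs i hi); auto. }
  assert (GS : forall s, 0 <= s <= S -> goodP N B a b s).
  { intros s hs. destruct (Req_dec s S) as [->|hne]; auto. apply C1; lra. }
  assert (HST : S = T).
  { destruct (Req_dec S T) as [e|ne]; auto. exfalso.
    assert (GS' : goodP N B' a b S) by (apply Hstep; auto).
    destruct (fin_delta N (fun i d => forall s, 0 <= s <= T -> Rabs (s - S) < d ->
                 Rabs (a i s) <= B /\ Rabs (b i s) <= B)) as [d [hd Hd]].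
    { intros i d d' hd' Hq s hs hss. apply Hq; auto. lra. }
    { intros i hi. destruct (Hc i hi) as [ca cb]. destruct (GS' i hi) as [ga gb].
      destruct (ca S (conj hS0 hST) (B - B')) as [d1 [hd1 Hd1]]; [lra|].
      destruct (cb S (conj hS0 hST) (B - B')) as [d2 [hd2 Hd2]]; [lra|].
      exists (Rmin d1 d2). split; [apply Rmin_pos; auto|].
      intros s hs hss.
      assert (Rabs (s - S) < d1) by (eapply Rlt_le_trans; [exact hss|apply Rmin_l]).
      assert (Rabs (s - S) < d2) by (eapply Rlt_le_trans; [exact hss|apply Rmin_r]).
      specialize (Hd1 s hs ltac:(assumption)). specialize (Hd2 s hs ltac:(assumption)).
      split; [revert Hd1 ga | revert Hd2 gb]; split_Rabs; lra. }
    set (t' := Rmin T (S + d/2)).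
    assert (ht'1 : S < t') by (unfold t'; apply Rmin_glb_lt; lra).
    assert (ht'2 : t' <= T) by apply Rmin_l.
    assert (Et' : E t').
    { split; [lra|]. intros s hs. destruct (Rle_dec s S) as [h|h]; [apply GS; lra|].
      intros i hi. apply Hd; auto; [lra|].
      assert (t' <= S + d/2) by apply Rmin_r. rewrite Rabs_right; lra. }
    specialize (HS1 t' Et'). lra. }
  intros t ht. apply Hstep; auto. intros s hs. apply GS. lra.
Qed.

Lemma mvt_bound (T K : R) (f df : R -> R) (t : R) :
  0 <= t <= T -> cont_on T f ->
  (forall s, 0 < s < t -> is_derive f s (df s)) ->
  (forall s, 0 < s < t -> Rabs (df s) <= K) ->
  Rabs (f t - f 0) <= K * t.
Proof.
  intros ht hf Hd HK.
  destruct (Req_dec t 0) as [e|ne].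
  { rewrite e, Rminus_diag, Rabs_R0. lra. }
  assert (tp : 0 < t) by lra.
  assert (hK : 0 <= K) by (specialize (HK (t/2) ltac:(lra)); pose proof (Rabs_pos (df (t/2))); lra).
  assert (inner : forall a b, 0 < a < b -> b < t -> Rabs (f b - f a) <= K * (b - a)).
  { intros a b hab hbt.
    destruct (MVT_gen f a b df) as [c [hc Hc]].
    - rewrite Rmin_left, Rmax_right by lra. intros x hx. apply Hd. lra.
    - rewrite Rmin_left, Rmax_right by lra. intros x hx.
      apply continuity_pt_filterlim. apply (ex_derive_continuous (K:=R_AbsRing) (V:=R_NormedModule)).
      eexists. apply Hd. lra.
    - rewrite Rmin_left, Rmax_right in hc by lra. rewrite Hc, Rabs_mult.
      rewrite (Rabs_right (b - a)) by lra. apply Rmult_le_compat_r; [lra|]. apply HK; lra. }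
  apply Rnot_lt_le. intros hlt.
  set (e := (Rabs (f t - f 0) - K * t) / 3).
  assert (he : 0 < e) by (unfold e; lra).
  destruct (hf 0 ltac:(lra) e he) as [d0 [hd0 Hd0]].
  destruct (hf t ht e he) as [d1 [hd1 Hd1]].
  set (a := Rmin (d0/2) (t/3)). set (b := Rmax (t - d1/2) (2*t/3)).
  assert (ha1 : 0 < a) by (unfold a; apply Rmin_pos; lra).
  assert (ha2 : a <= t/3) by apply Rmin_r. assert (ha3 : a <= d0/2) by apply Rmin_l.
  assert (hb1 : 2*t/3 <= b) by apply Rmax_r. assert (hb2 : t - d1/2 <= b) by apply Rmax_l.
  assert (hb3 : b < t) by (unfold b; apply Rmax_lub_lt; lra).
  specialize (Hd0 a ltac:(lra) ltac:(rewrite Rminus_0_r, Rabs_right; lra)).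
  specialize (Hd1 b ltac:(lra) ltac:(rewrite Rabs_left; lra)).
  specialize (inner a b ltac:(lra) hb3).
  assert (K * (b - a) <= K * t) by (apply Rmult_le_compat_l; lra).
  revert Hd0 Hd1 inner hlt. unfold e. split_Rabs; lra.
Qed.

Lemma sumR_ext n f g : (forall j, (j < n)%nat -> f j = g j) -> sumR n f = sumR n g.
Proof. induction n; simpl; intros H; auto. rewrite IHn, H; auto; intros; apply H; lia. Qed.

Lemma sumR_scal n c f : sumR n (fun j => c * f j) = c * sumR n f.
Proof. induction n; simpl; [ring|]. rewrite IHn; ring. Qed.

Lemma sumR_minus n f g : sumR n f - sumR n g = sumR n (fun j => f j - g j).
Proof. induction n; simpl; [ring|]. rewrite <- IHn; ring. Qed.

Lemma sumR_abs_le n f c : (forall j, (j < n)%nat -> Rabs (f j) <= c) -> Rabs (sumR n f) <= INR n * c.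
Proof.
  induction n; intros H. { simpl; rewrite Rabs_R0; lra. }
  rewrite S_INR. simpl. eapply Rle_trans; [apply Rabs_triang|].
  assert (Rabs (sumR n f) <= INR n * c) by (apply IHn; intros; apply H; lia).
  specialize (H n ltac:(lia)). lra.
Qed.

Lemma sumR_nonneg_le n f j : (forall k, (k < n)%nat -> 0 <= f k) -> (j < n)%nat -> f j <= sumR n f.
Proof.
  induction n; simpl; intros H hj; [lia|].
  assert (0 <= sumR n f).
  { clear IHn hj. induction n; simpl; [lra|]. assert (0 <= f n) by (apply H; lia).
    assert (0 <= sumR n f) by (apply IHn; intros; apply H; lia). lra. }
  destruct (Nat.eq_dec j n) as [->|hne].
  - lra.
  - assert (f j <= sumR n f) by (apply IHn; [intros; apply H; lia|lia]).
    assert (0 <= f n) by (apply H; lia). lra.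
Qed.

Lemma sum_ne_diff N i f g c : 0 <= c ->
  (forall j, (j < N)%nat -> j <> i -> Rabs (f j - g j) <= c) ->
  Rabs (sum_ne N i f - sum_ne N i g) <= INR N * c.
Proof.
  intros hc H. unfold sum_ne. rewrite sumR_minus. apply sumR_abs_le.
  intros j hj. destruct (Nat.eqb_spec j i).
  - rewrite Rminus_0_r, Rabs_R0; auto.
  - apply H; auto.
Qed.

Lemma sum_ne_bound N i f c : 0 <= c ->
  (forall j, (j < N)%nat -> j <> i -> Rabs (f j) <= c) ->
  Rabs (sum_ne N i f) <= INR N * c.
Proof.
  intros hc H. unfold sum_ne. apply sumR_abs_le.
  intros j hj. destruct (Nat.eqb_spec j i).
  - rewrite Rabs_R0; auto.
  - apply H; auto.
Qed.

Lemma sum_ne_scal_ext N i f g c :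
  (forall j, (j < N)%nat -> j <> i -> f j = c * g j) ->
  sum_ne N i f = c * sum_ne N i g.
Proof.
  intros H. unfold sum_ne. rewrite <- sumR_scal. apply sumR_ext.
  intros j hj. destruct (Nat.eqb_spec j i); [ring|]. apply H; auto.
Qed.

Lemma sum_ne_ext N i f g :
  (forall j, (j < N)%nat -> j <> i -> f j = g j) ->
  sum_ne N i f = sum_ne N i g.
Proof.
  intros H. rewrite (sum_ne_scal_ext N i f g 1); [ring|]. intros; rewrite H; auto; ring.
Qed.

Lemma abs_le_of_sq x y : 0 <= y -> x * x <= y * y -> Rabs x <= y.
Proof.
  intros hy h. destruct (Rle_dec (Rabs x) y) as [h'|h']; auto. exfalso.
  assert (Rabs x * Rabs x = x * x) by (rewrite <- Rabs_mult; apply Rabs_right; nra).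
  nra.
Qed.

Lemma inv_sq_bound u1 u2 m : 0 < m -> m ^ 2 <= u1 ^ 2 + u2 ^ 2 ->
  Rabs (u1 / (u1 ^ 2 + u2 ^ 2)) <= 1 / m.
Proof.
  intros hm hA. set (A := u1 ^ 2 + u2 ^ 2) in *.
  assert (hA0 : 0 < A) by nra.
  apply abs_le_of_sq. { apply Rlt_le, Rdiv_lt_0_compat; lra. }
  set (w := u1 / A). assert (hw : u1 = w * A) by (unfold w; field; lra).
  assert (hu : u1 ^ 2 <= A) by (unfold A; nra).
  rewrite hw in hu.
  assert (w * w * A <= 1).
  { assert (w * w * A * A <= 1 * A) by nra. nra. }
  assert (1 / m * (1 / m) * m ^ 2 = 1) by (field; lra).
  nra.
Qed.

Lemma inv_identity u1 u2 v1 v2 :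
  u1 ^ 2 + u2 ^ 2 <> 0 -> v1 ^ 2 + v2 ^ 2 <> 0 ->
  (u1 / (u1 ^ 2 + u2 ^ 2) - v1 / (v1 ^ 2 + v2 ^ 2)) ^ 2 +
  (u2 / (u1 ^ 2 + u2 ^ 2) - v2 / (v1 ^ 2 + v2 ^ 2)) ^ 2 =
  ((u1 - v1) ^ 2 + (u2 - v2) ^ 2) / ((u1 ^ 2 + u2 ^ 2) * (v1 ^ 2 + v2 ^ 2)).
Proof. intros. field. auto. Qed.

Lemma inv_lip u1 u2 v1 v2 m eta : 0 < m ->
  m ^ 2 <= u1 ^ 2 + u2 ^ 2 -> m ^ 2 <= v1 ^ 2 + v2 ^ 2 ->
  Rabs (u1 - v1) <= 2 * eta -> Rabs (u2 - v2) <= 2 * eta ->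
  Rabs (u1 / (u1 ^ 2 + u2 ^ 2) - v1 / (v1 ^ 2 + v2 ^ 2)) <= 3 * eta / m ^ 2 /\
  Rabs (u2 / (u1 ^ 2 + u2 ^ 2) - v2 / (v1 ^ 2 + v2 ^ 2)) <= 3 * eta / m ^ 2.
Proof.
  intros hm hu hv h1 h2.
  pose proof (inv_identity u1 u2 v1 v2 ltac:(nra) ltac:(nra)) as E.
  set (A := u1 ^ 2 + u2 ^ 2) in *. set (B := v1 ^ 2 + v2 ^ 2) in *.
  set (w1 := u1 / A - v1 / B) in *. set (w2 := u2 / A - v2 / B) in *.
  assert (he : 0 <= eta) by (pose proof (Rabs_pos (u1 - v1)); lra).
  assert (s1 : (u1 - v1) ^ 2 <= 4 * eta ^ 2).
  { assert ((u1 - v1) ^ 2 = Rabs (u1 - v1) * Rabs (u1 - v1)) by (rewrite <- (pow2_abs (u1 - v1)); ring).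
    pose proof (Rabs_pos (u1 - v1)). nra. }
  assert (s2 : (u2 - v2) ^ 2 <= 4 * eta ^ 2).
  { assert ((u2 - v2) ^ 2 = Rabs (u2 - v2) * Rabs (u2 - v2)) by (rewrite <- (pow2_abs (u2 - v2)); ring).
    pose proof (Rabs_pos (u2 - v2)). nra. }
  assert (hm4 : m ^ 2 * m ^ 2 <= A * B) by (apply Rmult_le_compat; [apply pow2_ge_0|apply pow2_ge_0|lra|lra]).
  assert (hm2 : 0 < m ^ 2) by (apply pow_lt; lra).
  assert (hAB : 0 < A * B) by (apply Rmult_lt_0_compat; lra).
  assert (key : w1 ^ 2 + w2 ^ 2 <= 8 * eta ^ 2 / (m ^ 2 * m ^ 2)).
  { rewrite E. apply Rle_trans with (8 * eta ^ 2 / (A * B)).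
    - unfold Rdiv. apply Rmult_le_compat_r; [apply Rlt_le, Rinv_0_lt_compat; lra|lra].
    - unfold Rdiv. apply Rmult_le_compat_l; [apply Rmult_le_pos; [lra|apply pow2_ge_0]|]. apply Rinv_le_contravar; [apply Rmult_lt_0_compat; lra|lra]. }
  assert (e9 : 8 * eta ^ 2 / (m ^ 2 * m ^ 2) <= (3 * eta / m ^ 2) * (3 * eta / m ^ 2)).
  { replace ((3 * eta / m ^ 2) * (3 * eta / m ^ 2)) with (9 * eta ^ 2 / (m ^ 2 * m ^ 2)) by (field; lra).
    unfold Rdiv. apply Rmult_le_compat_r; [apply Rlt_le, Rinv_0_lt_compat; nra|nra]. }
  assert (p : 0 <= 3 * eta / m ^ 2) by (apply Rmult_le_pos; [lra|apply Rlt_le, Rinv_0_lt_compat; lra]).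
  split; apply abs_le_of_sq; auto; nra.
Qed.

Definition inK (N : nat) (Y0 : nat -> R * R) (rho : R) (Y : nat -> R * R) : Prop :=
  forall i, (i < N)%nat -> Rabs (fst (Y i) - fst (Y0 i)) <= rho /\ Rabs (snd (Y i) - snd (Y0 i)) <= rho.

Definition clz (N : nat) (eta : R) (Y Z : nat -> R * R) : Prop :=
  forall i, (i < N)%nat -> Rabs (fst (Y i) - fst (Z i)) <= eta /\ Rabs (snd (Y i) - snd (Z i)) <= eta.

Definition tz (Y : nat -> R * R) i j :=
  - (snd (Y i) - snd (Y j)) / sqnorm (fst (Y i) - fst (Y j), snd (Y i) - snd (Y j)).
Definition tr (Y : nat -> R * R) i j :=
  (fst (Y i) - fst (Y j)) / sqnorm (fst (Y i) - fst (Y j), snd (Y i) - snd (Y j)).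

Definition hr (rs dl y : R) := y / (rs * (rs + dl * y)).

Definition Gd (N : nat) (gamma rs dl : R) (Y : nat -> R * R) (i : nat) : R * R :=
  ( gamma / (2 * PI) * sum_ne N i (fun j => tz Y i j) - gamma / (4 * PI) * hr rs dl (snd (Y i)),
    gamma / (2 * PI) * sum_ne N i (fun j => tr Y i j) ).

Lemma abs_div_le x q X c : 0 < c <= q -> Rabs x <= X -> Rabs (x / q) <= X / c.
Proof.
  intros hc hx. unfold Rdiv. rewrite Rabs_mult, Rabs_inv, (Rabs_right q) by lra.
  assert (0 <= X) by (pose proof (Rabs_pos x); lra).
  apply Rle_trans with (X * / q).
  - apply Rmult_le_compat_r; [apply Rlt_le, Rinv_0_lt_compat; lra|lra].
  - apply Rmult_le_compat_l; auto. apply Rinv_le_contravar; lra.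
Qed.

Lemma hr_bound rs dl y Rb : 0 < rs -> 0 <= dl -> dl * Rb <= rs / 2 -> Rabs y <= Rb ->
  Rabs (hr rs dl y) <= Rb / (rs * (rs / 2)).
Proof.
  intros hrs hdl hR hy. unfold hr. apply abs_div_le; auto.
  assert (dl * y >= - (rs/2)).
  { assert (- Rb <= y) by (revert hy; split_Rabs; lra). nra. }
  split; [nra|]. apply Rmult_le_compat_l; lra.
Qed.

Lemma hr_lip rs dl y y' Rb eta : 0 < rs -> 0 <= dl -> dl * Rb <= rs / 2 -> Rabs y <= Rb -> Rabs y' <= Rb ->
  Rabs (y - y') <= eta ->
  Rabs (hr rs dl y - hr rs dl y') <= eta / ((rs / 2) * (rs / 2)).
Proof.
  intros hrs hdl hR hy hy' he. unfold hr.
  assert (h1 : dl * y >= - (rs/2)).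
  { assert (- Rb <= y) by (revert hy; split_Rabs; lra). nra. }
  assert (h2 : dl * y' >= - (rs/2)).
  { assert (- Rb <= y') by (revert hy'; split_Rabs; lra). nra. }
  replace (y / (rs * (rs + dl * y)) - y' / (rs * (rs + dl * y')))
    with ((y - y') / ((rs + dl * y) * (rs + dl * y'))) by (field; lra).
  apply abs_div_le; auto. split; [nra|]. apply Rmult_le_compat; lra.
Qed.

Lemma hr_dl rs dl y Rb : 0 < rs -> 0 <= dl -> dl * Rb <= rs / 2 -> Rabs y <= Rb ->
  Rabs (hr rs dl y - hr rs 0 y) <= dl * Rb * Rb / (rs * rs * (rs / 2)).
Proof.
  intros hrs hdl hR hy. unfold hr.
  assert (h1 : dl * y >= - (rs/2)).
  { assert (- Rb <= y) by (revert hy; split_Rabs; lra). nra. }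
  replace (y / (rs * (rs + dl * y)) - y / (rs * (rs + 0 * y)))
    with ((- (dl * y * y)) / (rs * rs * (rs + dl * y))) by (field; lra).
  apply abs_div_le.
  - split; [apply Rmult_lt_0_compat; [apply Rmult_lt_0_compat|]; lra|].
    apply Rmult_le_compat_l; [apply Rlt_le, Rmult_lt_0_compat; lra|lra].
  - rewrite Rabs_Ropp, !Rabs_mult, (Rabs_right dl) by lra.
    pose proof (Rabs_pos y). apply Rmult_le_compat; [nra|lra|nra|lra].
Qed.

Lemma pair_sq_ge (u1 u2 m : R) : 0 <= m -> m <= Rabs u2 -> m ^ 2 <= u1 ^ 2 + u2 ^ 2.
Proof.
  intros hm h. assert (u2 ^ 2 = Rabs u2 ^ 2) by (rewrite pow2_abs; auto).
  assert (m ^ 2 <= Rabs u2 ^ 2) by (apply pow_incr; lra). nra.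
Qed.

Lemma gap_K N Y0 rho m Y i j : inK N Y0 rho Y -> (i < N)%nat -> (j < N)%nat ->
  m + 2 * rho <= Rabs (snd (Y0 i) - snd (Y0 j)) ->
  m <= Rabs (snd (Y i) - snd (Y j)).
Proof.
  intros hK hi hj hg. destruct (hK i hi) as [_ a]. destruct (hK j hj) as [_ b].
  revert a b hg. split_Rabs; lra.
Qed.

Lemma t_bound N Y0 rho m Y i j : 0 < m -> inK N Y0 rho Y -> (i < N)%nat -> (j < N)%nat ->
  m + 2 * rho <= Rabs (snd (Y0 i) - snd (Y0 j)) ->
  Rabs (tz Y i j) <= 1 / m /\ Rabs (tr Y i j) <= 1 / m.
Proof.
  intros hm hK hi hj hg. pose proof (gap_K N Y0 rho m Y i j hK hi hj hg) as g.
  unfold tz, tr, sqnorm; cbn [fst snd].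
  set (u1 := fst (Y i) - fst (Y j)) in *. set (u2 := snd (Y i) - snd (Y j)) in *.
  pose proof (pair_sq_ge u1 u2 m ltac:(lra) g) as hs.
  split.
  - replace (- u2 / (u1 ^ 2 + u2 ^ 2)) with (- (u2 / (u2 ^ 2 + u1 ^ 2))) by (rewrite (Rplus_comm (u1^2)); unfold Rdiv; ring).
    rewrite Rabs_Ropp. apply inv_sq_bound; auto. lra.
  - apply inv_sq_bound; auto.
Qed.

Lemma t_lip N Y0 rho m Y Z eta i j : 0 < m -> inK N Y0 rho Y -> inK N Y0 rho Z -> clz N eta Y Z ->
  (i < N)%nat -> (j < N)%nat ->
  m + 2 * rho <= Rabs (snd (Y0 i) - snd (Y0 j)) ->
  Rabs (tz Y i j - tz Z i j) <= 3 * eta / m ^ 2 /\ Rabs (tr Y i j - tr Z i j) <= 3 * eta / m ^ 2.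
Proof.
  intros hm hY hZ hc hi hj hg.
  pose proof (gap_K N Y0 rho m Y i j hY hi hj hg) as g1.
  pose proof (gap_K N Y0 rho m Z i j hZ hi hj hg) as g2.
  destruct (hc i hi) as [c1 c2]. destruct (hc j hj) as [c3 c4].
  unfold tz, tr, sqnorm; cbn [fst snd].
  set (u1 := fst (Y i) - fst (Y j)) in *. set (u2 := snd (Y i) - snd (Y j)) in *.
  set (v1 := fst (Z i) - fst (Z j)) in *. set (v2 := snd (Z i) - snd (Z j)) in *.
  assert (d1 : Rabs (u1 - v1) <= 2 * eta) by (unfold u1, v1; revert c1 c3; split_Rabs; lra).
  assert (d2 : Rabs (u2 - v2) <= 2 * eta) by (unfold u2, v2; revert c2 c4; split_Rabs; lra).
  destruct (inv_lip u1 u2 v1 v2 m eta hm (pair_sq_ge u1 u2 m ltac:(lra) g1)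
              (pair_sq_ge v1 v2 m ltac:(lra) g2) d1 d2) as [l1 l2].
  split; auto.
  replace (- u2 / (u1 ^ 2 + u2 ^ 2) - - v2 / (v1 ^ 2 + v2 ^ 2))
    with (- (u2 / (u1 ^ 2 + u2 ^ 2) - v2 / (v1 ^ 2 + v2 ^ 2))) by (unfold Rdiv; ring).
  rewrite Rabs_Ropp; auto.
Qed.

Definition Mb N gamma rs m Rb := gamma / (2 * PI) * (INR N * (1 / m)) + gamma / (4 * PI) * (Rb / (rs * (rs / 2))).
Definition Lb N gamma rs m := gamma / (2 * PI) * (INR N * (3 / m ^ 2)) + gamma / (4 * PI) * (1 / ((rs / 2) * (rs / 2))).
Definition Db gamma rs Rb := gamma / (4 * PI) * (Rb * Rb / (rs * rs * (rs / 2))).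

Definition params (N : nat) (Y0 : nat -> R * R) (gamma rs m rho Rb dl : R) : Prop :=
  0 < gamma /\ 0 < rs /\ 0 < m /\ 0 <= rho /\
  (forall i j, (i < N)%nat -> (j < N)%nat -> i <> j -> m + 2 * rho <= Rabs (snd (Y0 i) - snd (Y0 j))) /\
  (forall i, (i < N)%nat -> Rabs (snd (Y0 i)) + rho <= Rb) /\
  0 <= dl /\ dl * Rb <= rs / 2.

Lemma abs_sub_le a b : Rabs (a - b) <= Rabs a + Rabs b.
Proof. split_Rabs; lra. Qed.

Lemma g_pos gamma : 0 < gamma -> 0 < gamma / (2 * PI) /\ 0 < gamma / (4 * PI).
Proof. intros. pose proof PI_RGT_0. split; apply Rdiv_lt_0_compat; lra. Qed.

Lemma K_Rb N Y0 rho Rb Y i : inK N Y0 rho Y -> (i < N)%nat ->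
  (forall i, (i < N)%nat -> Rabs (snd (Y0 i)) + rho <= Rb) -> Rabs (snd (Y i)) <= Rb.
Proof.
  intros hK hi hR. destruct (hK i hi) as [_ a]. specialize (hR i hi). revert a hR. split_Rabs; lra.
Qed.

Lemma Gd_bound N Y0 gamma rs m rho Rb dl Y :
  params N Y0 gamma rs m rho Rb dl -> inK N Y0 rho Y ->
  forall i, (i < N)%nat ->
    Rabs (fst (Gd N gamma rs dl Y i)) <= Mb N gamma rs m Rb /\
    Rabs (snd (Gd N gamma rs dl Y i)) <= Mb N gamma rs m Rb.
Proof.
  intros [hg [hrs [hm [hrho [Hgap [HRb [hdl hdR]]]]]]] hK i hi.
  destruct (g_pos gamma hg) as [g2 g4].
  assert (hm1 : 0 <= 1 / m) by (apply Rlt_le, Rdiv_lt_0_compat; lra).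
  assert (S1 : Rabs (sum_ne N i (fun j => tz Y i j)) <= INR N * (1 / m)).
  { apply sum_ne_bound; auto. intros j hj hne. apply (t_bound N Y0 rho m Y i j); auto. }
  assert (S2 : Rabs (sum_ne N i (fun j => tr Y i j)) <= INR N * (1 / m)).
  { apply sum_ne_bound; auto. intros j hj hne. apply (t_bound N Y0 rho m Y i j); auto. }
  assert (H3 : Rabs (hr rs dl (snd (Y i))) <= Rb / (rs * (rs / 2))).
  { apply hr_bound; auto. apply (K_Rb N Y0 rho Rb Y i); auto. }
  assert (p3 : 0 <= Rb / (rs * (rs / 2))) by (pose proof (Rabs_pos (hr rs dl (snd (Y i)))); lra).
  unfold Gd, Mb; cbn [fst snd]. split.
  - eapply Rle_trans; [apply abs_sub_le|]. rewrite !Rabs_mult, !(Rabs_right (gamma / _)) by lra.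
    apply Rplus_le_compat; apply Rmult_le_compat_l; lra.
  - rewrite !Rabs_mult, !(Rabs_right (gamma / _)) by lra.
    assert (0 <= gamma / (4 * PI) * (Rb / (rs * (rs / 2)))) by (apply Rmult_le_pos; lra).
    assert (gamma / (2 * PI) * Rabs (sum_ne N i (fun j => tr Y i j)) <= gamma / (2 * PI) * (INR N * (1 / m)))
      by (apply Rmult_le_compat_l; lra).
    lra.
Qed.

Lemma Gd_lip N Y0 gamma rs m rho Rb dl Y Z eta :
  params N Y0 gamma rs m rho Rb dl -> inK N Y0 rho Y -> inK N Y0 rho Z -> clz N eta Y Z ->
  clz N (Lb N gamma rs m * eta) (Gd N gamma rs dl Y) (Gd N gamma rs dl Z).
Proof.
  intros [hg [hrs [hm [hrho [Hgap [HRb [hdl hdR]]]]]]] hY hZ hc i hi.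
  destruct (g_pos gamma hg) as [g2 g4].
  assert (he : 0 <= eta) by (destruct (hc i hi) as [a _]; pose proof (Rabs_pos (fst (Y i) - fst (Z i))); lra).
  assert (hm2 : 0 < m ^ 2) by (apply pow_lt; lra).
  assert (c0 : 0 <= 3 * eta / m ^ 2) by (apply Rmult_le_pos; [lra|apply Rlt_le, Rinv_0_lt_compat; lra]).
  assert (S1 : Rabs (sum_ne N i (fun j => tz Y i j) - sum_ne N i (fun j => tz Z i j)) <= INR N * (3 * eta / m ^ 2)).
  { apply sum_ne_diff; auto. intros j hj hne. apply (t_lip N Y0 rho m Y Z eta i j); auto. }
  assert (S2 : Rabs (sum_ne N i (fun j => tr Y i j) - sum_ne N i (fun j => tr Z i j)) <= INR N * (3 * eta / m ^ 2)).
  { apply sum_ne_diff; auto. intros j hj hne. apply (t_lip N Y0 rho m Y Z eta i j); auto. }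
  assert (H3 : Rabs (hr rs dl (snd (Y i)) - hr rs dl (snd (Z i))) <= eta / ((rs / 2) * (rs / 2))).
  { apply (hr_lip rs dl _ _ Rb); auto.
    - apply (K_Rb N Y0 rho Rb Y i); auto.
    - apply (K_Rb N Y0 rho Rb Z i); auto.
    - destruct (hc i hi); auto. }
  assert (p3 : 0 <= eta / ((rs / 2) * (rs / 2))) by (apply Rmult_le_pos; [lra|apply Rlt_le, Rinv_0_lt_compat; nra]).
  assert (EL : Lb N gamma rs m * eta = gamma / (2 * PI) * (INR N * (3 * eta / m ^ 2)) + gamma / (4 * PI) * (eta / ((rs / 2) * (rs / 2)))).
  { unfold Lb. field. split; [lra|]. pose proof PI_RGT_0. lra. }
  pose proof (pos_INR N) as hN.
  assert (0 <= INR N * (3 * eta / m ^ 2)) by (apply Rmult_le_pos; lra).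
  unfold Gd; cbn [fst snd]. rewrite EL. split.
  - replace (gamma / (2 * PI) * sum_ne N i (fun j => tz Y i j) - gamma / (4 * PI) * hr rs dl (snd (Y i)) -
      (gamma / (2 * PI) * sum_ne N i (fun j => tz Z i j) - gamma / (4 * PI) * hr rs dl (snd (Z i))))
      with (gamma / (2 * PI) * (sum_ne N i (fun j => tz Y i j) - sum_ne N i (fun j => tz Z i j)) -
            gamma / (4 * PI) * (hr rs dl (snd (Y i)) - hr rs dl (snd (Z i)))) by ring.
    eapply Rle_trans; [apply abs_sub_le|]. rewrite !Rabs_mult, !(Rabs_right (gamma / _)) by lra.
    apply Rplus_le_compat; apply Rmult_le_compat_l; lra.
  - rewrite <- Rmult_minus_distr_l, Rabs_mult, Rabs_right by lra.
    assert (0 <= gamma / (4 * PI) * (eta / (rs / 2 * (rs / 2)))) by (apply Rmult_le_pos; lra).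
    assert (gamma / (2 * PI) * Rabs (sum_ne N i (fun j => tr Y i j) - sum_ne N i (fun j => tr Z i j)) <= gamma / (2 * PI) * (INR N * (3 * eta / m ^ 2)))
      by (apply Rmult_le_compat_l; lra).
    lra.
Qed.

Lemma Gd_dl N Y0 gamma rs m rho Rb dl Y :
  params N Y0 gamma rs m rho Rb dl -> inK N Y0 rho Y ->
  clz N (Db gamma rs Rb * dl) (Gd N gamma rs dl Y) (Gd N gamma rs 0 Y).
Proof.
  intros [hg [hrs [hm [hrho [Hgap [HRb [hdl hdR]]]]]]] hY i hi.
  destruct (g_pos gamma hg) as [g2 g4].
  assert (H3 : Rabs (hr rs dl (snd (Y i)) - hr rs 0 (snd (Y i))) <= dl * Rb * Rb / (rs * rs * (rs / 2))).
  { apply hr_dl; auto. apply (K_Rb N Y0 rho Rb Y i); auto. }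
  assert (p : 0 <= dl * Rb * Rb / (rs * rs * (rs / 2))) by (pose proof (Rabs_pos (hr rs dl (snd (Y i)) - hr rs 0 (snd (Y i)))); lra).
  assert (ED : Db gamma rs Rb * dl = gamma / (4 * PI) * (dl * Rb * Rb / (rs * rs * (rs / 2)))).
  { unfold Db. field. split; [lra|]. pose proof PI_RGT_0. lra. }
  unfold Gd; cbn [fst snd]. rewrite ED. split.
  - replace (gamma / (2 * PI) * sum_ne N i (fun j => tz Y i j) - gamma / (4 * PI) * hr rs dl (snd (Y i)) -
      (gamma / (2 * PI) * sum_ne N i (fun j => tz Y i j) - gamma / (4 * PI) * hr rs 0 (snd (Y i))))
      with (- (gamma / (4 * PI) * (hr rs dl (snd (Y i)) - hr rs 0 (snd (Y i))))) by ring.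
    rewrite Rabs_Ropp, Rabs_mult, Rabs_right by lra. apply Rmult_le_compat_l; lra.
  - rewrite Rminus_diag, Rabs_R0. apply Rmult_le_pos; lra.
Qed.

Lemma small_pow2 K eps : 0 < eps -> exists n, K / 2 ^ n < eps.
Proof.
  intros he. destruct (INR_archimed eps K he) as [n hn]. exists n.
  pose proof (INR_le_pow2 n). assert (hp : 0 < 2 ^ n) by (apply pow_lt; lra).
  apply (Rmult_lt_reg_r (2 ^ n)); auto. unfold Rdiv. rewrite Rmult_assoc, Rinv_l by lra.
  destruct (Rle_dec 0 eps); nra.
Qed.

Lemma geo_tele (u : nat -> R) K : (forall n, Rabs (u (S n) - u n) <= K / 2 ^ n) ->
  forall n k, Rabs (u (n + k)%nat - u n) <= 2 * K / 2 ^ n - 2 * K / 2 ^ (n + k).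
Proof.
  intros H n k. induction k as [|k IH].
  - rewrite Nat.add_0_r, Rminus_diag, Rabs_R0. lra.
  - replace (n + S k)%nat with (S (n + k)) by lia.
    specialize (H (n + k)%nat).
    assert (E : 2 * K / 2 ^ S (n + k) = K / 2 ^ (n + k)) by (simpl; field; apply pow_nonzero; lra).
    rewrite E. 
    replace (u (S (n + k)) - u n) with ((u (S (n + k)) - u (n + k)%nat) + (u (n + k)%nat - u n)) by ring.
    eapply Rle_trans; [apply Rabs_triang|].
    assert (E2 : 2 * K / 2 ^ (n + k) = K / 2 ^ (n + k) + K / 2 ^ (n + k)) by (field; apply pow_nonzero; lra).
    rewrite E2 in IH. lra.
Qed.

Lemma geo_cauchy (u : nat -> R) K : (forall n, Rabs (u (S n) - u n) <= K / 2 ^ n) ->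
  forall n m, (n <= m)%nat -> Rabs (u m - u n) <= 2 * K / 2 ^ n.
Proof.
  intros H n m hnm. replace m with (n + (m - n))%nat by lia.
  pose proof (geo_tele u K H n (m - n)).
  assert (hK : 0 <= K) by (specialize (H 0%nat); simpl in H; pose proof (Rabs_pos (u 1%nat - u 0%nat)); lra).
  assert (0 <= 2 * K / 2 ^ (n + (m - n))) by (apply Rmult_le_pos; [lra|apply Rlt_le, Rinv_0_lt_compat, pow_lt; lra]).
  lra.
Qed.

Lemma lim_close (u : nat -> R) (l a B : R) n : is_lim_seq u l ->
  (forall m, (n <= m)%nat -> Rabs (u m - a) <= B) -> Rabs (l - a) <= B.
Proof.
  intros hl H. apply Rnot_lt_le. intros hlt.
  apply is_lim_seq_spec in hl. unfold is_lim_seq' in hl.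
  assert (he : 0 < Rabs (l - a) - B) by lra.
  destruct (hl (mkposreal _ he)) as [N0 HN]. simpl in HN.
  specialize (HN (Nat.max N0 n) ltac:(lia)). specialize (H (Nat.max N0 n) ltac:(lia)).
  revert HN H hlt. split_Rabs; lra.
Qed.

Lemma geo_lim (u : nat -> R) K : (forall n, Rabs (u (S n) - u n) <= K / 2 ^ n) ->
  is_lim_seq u (real (Lim_seq u)) /\ forall n, Rabs (real (Lim_seq u) - u n) <= 2 * K / 2 ^ n.
Proof.
  intros H.
  assert (hK : 0 <= K) by (specialize (H 0%nat); simpl in H; pose proof (Rabs_pos (u 1%nat - u 0%nat)); lra).
  assert (ex : ex_finite_lim_seq u).
  { apply ex_lim_seq_cauchy_corr. intros eps.
    destruct (small_pow2 (2 * K) (eps / 2)) as [n0 hn0]. { pose proof (cond_pos eps); lra. }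
    exists n0. intros n m hn hm.
    pose proof (geo_cauchy u K H n0 n hn). pose proof (geo_cauchy u K H n0 m hm).
    revert H0 H1 hn0. split_Rabs; lra. }
  destruct ex as [l hl]. rewrite (is_lim_seq_unique u l hl). simpl. split; auto.
  intros n. apply (lim_close u l (u n) _ n hl). intros m hm. apply geo_cauchy; auto.
Qed.

Lemma cont_ex_RInt (g : R -> R) a b : (forall x, continuous g x) -> ex_RInt g a b.
Proof. intros H. apply (ex_RInt_continuous (V:=R_CompleteNormedModule)). intros; apply H. Qed.

Lemma int_lip (g : R -> R) T M a b : (forall x, continuous g x) ->
  (forall s, 0 <= s <= T -> Rabs (g s) <= M) -> 0 <= a <= T -> 0 <= b <= T ->
  Rabs (RInt g 0 b - RInt g 0 a) <= M * Rabs (b - a).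
Proof.
  intros hc hM.
  assert (W : forall a b, 0 <= a <= T -> 0 <= b <= T -> a <= b -> Rabs (RInt g 0 b - RInt g 0 a) <= M * Rabs (b - a)).
  { intros a' b' ha hb hab.
    pose proof (RInt_Chasles g 0 a' b' (cont_ex_RInt g _ _ hc) (cont_ex_RInt g _ _ hc)) as E.
    assert (Hq : Rabs (RInt g a' b') <= (b' - a') * M).
    { apply abs_RInt_le_const; auto. apply cont_ex_RInt; auto. intros t ht. apply hM. lra. }
    rewrite (Rabs_right (b' - a')) by lra. rewrite Rmult_comm.
    revert E Hq. generalize (RInt g 0 a') (RInt g a' b') (RInt g 0 b'). intros x y z E Hq.
    change R in x, y, z. change (x + y = z) in E. subst z.
    replace (x + y - x) with y by ring. exact Hq. }
  intros ha hb. destruct (Rle_dec a b) as [h|h].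
  - apply W; auto.
  - rewrite Rabs_minus_sym, (Rabs_minus_sym b). apply W; auto. lra.
Qed.

Lemma int_diff (g1 g2 : R -> R) c K : (forall x, continuous g1 x) -> (forall x, continuous g2 x) ->
  0 <= c -> (forall s, 0 <= s <= c -> Rabs (g1 s - g2 s) <= K) ->
  Rabs (RInt g1 0 c - RInt g2 0 c) <= c * K.
Proof.
  intros h1 h2 hc H.
  pose proof (RInt_minus g1 g2 0 c (cont_ex_RInt g1 _ _ h1) (cont_ex_RInt g2 _ _ h2)) as E.
  change (RInt (fun x => g1 x - g2 x) 0 c = RInt g1 0 c - RInt g2 0 c) in E.
  rewrite <- E. replace c with (c - 0) at 2 by ring. apply abs_RInt_le_const; auto.
  apply (ex_RInt_continuous (V:=R_CompleteNormedModule)). intros z _.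
  apply (continuous_minus (K:=R_AbsRing) (V:=R_NormedModule) g1 g2); auto.
Qed.

Lemma pm (x y : R) : x + y - x = y.
Proof. ring. Qed.
Lemma pmm (x y z : R) : x + y - (x + z) = y - z.
Proof. ring. Qed.

Lemma int_bound (g : R -> R) T M c : (forall x, continuous g x) ->
  (forall s, 0 <= s <= T -> Rabs (g s) <= M) -> 0 <= c <= T -> Rabs (RInt g 0 c) <= M * T.
Proof.
  intros hc hM hcT.
  assert (hM0 : 0 <= M) by (specialize (hM 0 ltac:(lra)); pose proof (Rabs_pos (g 0)); lra).
  eapply Rle_trans; [apply abs_RInt_le_const; [lra|apply cont_ex_RInt; auto|intros t ht; apply hM; lra]|].
  rewrite Rmult_comm. apply Rmult_le_compat_l; lra.
Qed.

Definition clamp (T t : R) := Rmax 0 (Rmin T t).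

Lemma clamp_in T t : 0 <= T -> 0 <= clamp T t <= T.
Proof.
  intros hT. unfold clamp. split; [apply Rmax_l|]. apply Rmax_lub; auto. apply Rmin_l.
Qed.

Lemma clamp_id T t : 0 <= t <= T -> clamp T t = t.
Proof. intros h. unfold clamp. rewrite Rmin_right by lra. rewrite Rmax_right by lra. auto. Qed.

Lemma clamp_lip T t t' : Rabs (clamp T t - clamp T t') <= Rabs (t - t').
Proof.
  unfold clamp. unfold Rmax, Rmin.
  repeat (destruct Rle_dec); split_Rabs; lra.
Qed.

Lemma ball_R (x e y : R) : ball x e y -> Rabs (y - x) < e.
Proof. intros h. exact h. Qed.

Definition step (G : (nat -> R * R) -> nat -> R * R) (Y0 : nat -> R * R) (T : R)
  (Y : nat -> R -> R * R) : nat -> R -> R * R :=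
  fun i t => (fst (Y0 i) + RInt (fun s => fst (G (fun j => Y j s) i)) 0 (clamp T t),
              snd (Y0 i) + RInt (fun s => snd (G (fun j => Y j s) i)) 0 (clamp T t)).

Fixpoint pic G Y0 T (n : nat) : nat -> R -> R * R :=
  match n with O => fun i _ => Y0 i | S n => step G Y0 T (pic G Y0 T n) end.

Definition trajOK N Y0 rho M (Y : nat -> R -> R * R) : Prop :=
  (forall t, inK N Y0 rho (fun j => Y j t)) /\
  (forall t t', clz N (M * Rabs (t - t')) (fun j => Y j t) (fun j => Y j t')).

Definition fieldOK N Y0 rho M Lc (G : (nat -> R * R) -> nat -> R * R) : Prop :=
  (forall Y, inK N Y0 rho Y -> forall i, (i < N)%nat -> Rabs (fst (G Y i)) <= M /\ Rabs (snd (G Y i)) <= M) /\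
  (forall Y Z eta, inK N Y0 rho Y -> inK N Y0 rho Z -> clz N eta Y Z -> clz N (Lc * eta) (G Y) (G Z)).

Lemma integrand_cont N Y0 rho M Lc G Y i : fieldOK N Y0 rho M Lc G -> trajOK N Y0 rho M Y -> (i < N)%nat ->
  forall x, continuous (fun s => fst (G (fun j => Y j s) i)) x /\ continuous (fun s => snd (G (fun j => Y j s) i)) x.
Proof.
  intros [_ Hl] [P1 P2] hi x. split; apply (lip_continuous _ _ (Lc * M)); intros s;
    destruct (Hl _ _ _ (P1 s) (P1 x) (P2 s x) i hi); rewrite Rmult_assoc; auto.
Qed.

Lemma step_ok N Y0 rho M Lc G T Y : fieldOK N Y0 rho M Lc G -> trajOK N Y0 rho M Y ->
  0 <= T -> M * T <= rho -> trajOK N Y0 rho M (step G Y0 T Y).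
Proof.
  intros hF hY hT hMT. pose proof hF as [Hb Hl]. pose proof hY as [P1 P2].
  assert (bd : forall i, (i < N)%nat -> forall s, 0 <= s <= T ->
     Rabs (fst (G (fun j => Y j s) i)) <= M /\ Rabs (snd (G (fun j => Y j s) i)) <= M).
  { intros i hi s hs. apply Hb; auto. }
  split.
  - intros t i hi. unfold step; cbn [fst snd]. rewrite !pm.
    destruct (integrand_cont N Y0 rho M Lc G Y i hF hY hi 0) as [_ _].
    pose proof (clamp_in T t hT) as hc.
    split; (eapply Rle_trans; [apply (int_bound _ T M); [intros x; apply (integrand_cont N Y0 rho M Lc G Y i hF hY hi x)|intros s hs; apply (bd i hi s hs)|auto]|]); lra.
  - intros t t' i hi. unfold step; cbn [fst snd]. rewrite !pmm.
    assert (hM : 0 <= M) by (destruct (bd i hi 0 ltac:(lra)) as [a _]; pose proof (Rabs_pos (fst (G (fun j => Y j 0) i))); lra).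
    pose proof (clamp_lip T t t').
    split; (eapply Rle_trans; [apply (int_lip _ T M); [intros x; apply (integrand_cont N Y0 rho M Lc G Y i hF hY hi x)|intros s hs; apply (bd i hi s hs)|apply clamp_in; auto|apply clamp_in; auto]|]);
      apply Rmult_le_compat_l; auto.
Qed.

Lemma pic_ok N Y0 rho M Lc G T : fieldOK N Y0 rho M Lc G -> 0 <= rho -> 0 <= M ->
  0 <= T -> M * T <= rho -> forall n, trajOK N Y0 rho M (pic G Y0 T n).
Proof.
  intros hF hr hM hT hMT n. induction n as [|n IH].
  - split.
    + intros t i hi. simpl. rewrite !Rminus_diag, Rabs_R0. lra.
    + intros t t' i hi. simpl. rewrite !Rminus_diag, Rabs_R0.
      pose proof (Rabs_pos (t - t')). split; apply Rmult_le_pos; lra.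
  - simpl. apply (step_ok N Y0 rho M Lc); auto.
Qed.

Lemma clz_mono N a b Y Z : clz N a Y Z -> a <= b -> clz N b Y Z.
Proof. intros H h i hi. destruct (H i hi); split; lra. Qed.

Lemma step_diff N Y0 rho M Lc G T Y Z eta : fieldOK N Y0 rho M Lc G -> trajOK N Y0 rho M Y -> trajOK N Y0 rho M Z ->
  0 <= T -> (forall s, clz N eta (fun j => Y j s) (fun j => Z j s)) ->
  forall t, clz N (clamp T t * (Lc * eta)) (fun j => step G Y0 T Y j t) (fun j => step G Y0 T Z j t).
Proof.
  intros hF hY hZ hT Hc t i hi. pose proof hF as [_ Hl]. pose proof hY as [Y1 _]. pose proof hZ as [Z1 _].
  unfold step; cbn [fst snd]. rewrite !pmm. pose proof (clamp_in T t hT) as hc.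
  split; apply int_diff; try lra;
    try (intros x; apply (integrand_cont N Y0 rho M Lc G _ i hF hY hi x));
    try (intros x; apply (integrand_cont N Y0 rho M Lc G _ i hF hZ hi x));
    intros s hs; apply (Hl _ _ _ (Y1 s) (Z1 s) (Hc s) i hi).
Qed.

Lemma pic_contract N Y0 rho M Lc G T : fieldOK N Y0 rho M Lc G -> 0 <= rho -> 0 <= M -> 0 <= Lc ->
  0 <= T -> M * T <= rho -> Lc * T <= 1/2 ->
  forall n t, clz N (rho / 2 ^ n) (fun j => pic G Y0 T (S n) j t) (fun j => pic G Y0 T n j t).
Proof.
  intros hF hr hM hL hT hMT hLT n. induction n as [|n IH]; intros t.
  - simpl pow. rewrite Rdiv_1_r. destruct (pic_ok N Y0 rho M Lc G T hF hr hM hT hMT 1%nat) as [P1 _].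
    apply (P1 t).
  - pose proof (pic_ok N Y0 rho M Lc G T hF hr hM hT hMT (S n)) as hS.
    pose proof (pic_ok N Y0 rho M Lc G T hF hr hM hT hMT n) as hn.
    pose proof (step_diff N Y0 rho M Lc G T _ _ _ hF hS hn hT IH t) as D.
    pose proof (clamp_in T t hT) as hc.
    assert (hp : 0 < 2 ^ n) by (apply pow_lt; lra).
    assert (E : clamp T t * (Lc * (rho / 2 ^ n)) <= rho / 2 ^ S n).
    { simpl pow. apply Rle_trans with (T * Lc * (rho / 2 ^ n)).
      - rewrite <- Rmult_assoc. apply Rmult_le_compat_r; [apply Rmult_le_pos; [lra|apply Rlt_le, Rinv_0_lt_compat; lra]|].
        apply Rmult_le_compat_r; lra.
      - replace (rho / (2 * 2 ^ n)) with (1/2 * (rho / 2 ^ n)) by (field; lra).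
        apply Rmult_le_compat_r; [apply Rmult_le_pos; [lra|apply Rlt_le, Rinv_0_lt_compat; lra]|lra]. }
    exact (clz_mono N _ _ _ _ D E).
Qed.

Definition ylim G Y0 T (i : nat) (t : R) : R * R :=
  (real (Lim_seq (fun n => fst (pic G Y0 T n i t))), real (Lim_seq (fun n => snd (pic G Y0 T n i t)))).

Lemma le_of_pow2 x y K : (forall n, x <= y + K / 2 ^ n) -> x <= y.
Proof. intros H. assert (x - y <= 0); [|lra]. apply (le_pow2_0 _ K). intros n. specialize (H n). lra. Qed.

Lemma two_halves rho n : 2 * rho / 2 ^ n + 2 * rho / 2 ^ n = 4 * rho / 2 ^ n.
Proof. field. apply pow_nonzero; lra. Qed.


Lemma ylim_props N Y0 rho M Lc G T : fieldOK N Y0 rho M Lc G -> 0 <= rho -> 0 <= M -> 0 <= Lc ->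
  0 <= T -> M * T <= rho -> Lc * T <= 1/2 ->
  (forall n t i, (i < N)%nat ->
     Rabs (fst (ylim G Y0 T i t) - fst (pic G Y0 T n i t)) <= 2 * rho / 2 ^ n /\
     Rabs (snd (ylim G Y0 T i t) - snd (pic G Y0 T n i t)) <= 2 * rho / 2 ^ n) /\
  trajOK N Y0 rho M (ylim G Y0 T).
Proof.
  intros hF hr hM hL hT hMT hLT.
  pose proof (pic_contract N Y0 rho M Lc G T hF hr hM hL hT hMT hLT) as PC.
  pose proof (pic_ok N Y0 rho M Lc G T hF hr hM hT hMT) as PO.
  assert (GL : forall t i, (i < N)%nat ->
     (is_lim_seq (fun n => fst (pic G Y0 T n i t)) (fst (ylim G Y0 T i t)) /\
      forall n, Rabs (fst (ylim G Y0 T i t) - fst (pic G Y0 T n i t)) <= 2 * rho / 2 ^ n) /\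
     (is_lim_seq (fun n => snd (pic G Y0 T n i t)) (snd (ylim G Y0 T i t)) /\
      forall n, Rabs (snd (ylim G Y0 T i t) - snd (pic G Y0 T n i t)) <= 2 * rho / 2 ^ n)).
  { intros t i hi. unfold ylim; cbn [fst snd]. split; apply geo_lim; intros n; apply (PC n t i hi). }
  assert (CL : forall n t i, (i < N)%nat ->
     Rabs (fst (ylim G Y0 T i t) - fst (pic G Y0 T n i t)) <= 2 * rho / 2 ^ n /\
     Rabs (snd (ylim G Y0 T i t) - snd (pic G Y0 T n i t)) <= 2 * rho / 2 ^ n).
  { intros n t i hi. destruct (GL t i hi) as [[_ a] [_ b]]. auto. }
  split; auto. split.
  - intros t i hi. destruct (GL t i hi) as [[l1 _] [l2 _]].
    split; [apply (lim_close _ _ _ _ 0 l1)|apply (lim_close _ _ _ _ 0 l2)];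
      intros m _; destruct (PO m) as [P1 _]; apply (P1 t i hi).
  - intros t t' i hi.
    split; apply (le_of_pow2 _ _ (4 * rho)); intros n; rewrite <- two_halves;
      destruct (CL n t i hi) as [a1 b1]; destruct (CL n t' i hi) as [a2 b2];
      destruct (PO n) as [_ P2]; destruct (P2 t t' i hi) as [c1 c2];
      revert a1 b1 a2 b2 c1 c2; split_Rabs; lra.
Qed.

Lemma clz_sym N a Y Z : clz N a Y Z -> clz N a Z Y.
Proof. intros H i hi. destruct (H i hi). rewrite !(Rabs_minus_sym (fst (Z i))), !(Rabs_minus_sym (snd (Z i))). auto. Qed.

Lemma ylim_fix N Y0 rho M Lc G T : fieldOK N Y0 rho M Lc G -> 0 <= rho -> 0 <= M -> 0 <= Lc ->
  0 <= T -> M * T <= rho -> Lc * T <= 1/2 ->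
  forall t i, (i < N)%nat -> ylim G Y0 T i t = step G Y0 T (ylim G Y0 T) i t.
Proof.
  intros hF hr hM hL hT hMT hLT t i hi.
  destruct (ylim_props N Y0 rho M Lc G T hF hr hM hL hT hMT hLT) as [CL YO].
  pose proof (pic_ok N Y0 rho M Lc G T hF hr hM hT hMT) as PO.
  assert (B : forall n, Rabs (fst (ylim G Y0 T i t) - fst (step G Y0 T (ylim G Y0 T) i t)) <= 0 + 2 * rho / 2 ^ n /\
                        Rabs (snd (ylim G Y0 T i t) - snd (step G Y0 T (ylim G Y0 T) i t)) <= 0 + 2 * rho / 2 ^ n).
  { intros n.
    assert (hcl : forall s, clz N (2 * rho / 2 ^ n) (fun j => pic G Y0 T n j s) (fun j => ylim G Y0 T j s)).
    { intros s. apply clz_sym. intros j hj. apply CL; auto. }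
    pose proof (step_diff N Y0 rho M Lc G T _ _ _ hF (PO n) YO hT hcl t i hi) as [d1 d2].
    destruct (CL (S n) t i hi) as [e1 e2].
    change (pic G Y0 T (S n)) with (step G Y0 T (pic G Y0 T n)) in e1, e2.
    pose proof (clamp_in T t hT) as hc.
    assert (hp : 0 < 2 ^ n) by (apply pow_lt; lra).
    assert (k1 : clamp T t * (Lc * (2 * rho / 2 ^ n)) <= rho / 2 ^ n).
    { apply Rle_trans with (T * Lc * (2 * rho / 2 ^ n)).
      - rewrite <- Rmult_assoc. apply Rmult_le_compat_r; [apply Rmult_le_pos; [lra|apply Rlt_le, Rinv_0_lt_compat; lra]|].
        apply Rmult_le_compat_r; lra.
      - replace (rho / 2 ^ n) with (1/2 * (2 * rho / 2 ^ n)) by (field; lra).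
        apply Rmult_le_compat_r; [apply Rmult_le_pos; [lra|apply Rlt_le, Rinv_0_lt_compat; lra]|lra]. }
    assert (k2 : 2 * rho / 2 ^ S n = rho / 2 ^ n) by (simpl pow; field; lra).
    rewrite k2 in e1, e2.
    assert (k3 : 2 * rho / 2 ^ n = rho / 2 ^ n + rho / 2 ^ n) by (field; lra).
    rewrite k3. revert d1 d2 e1 e2 k1. split_Rabs; lra. }
  assert (E1 : fst (ylim G Y0 T i t) = fst (step G Y0 T (ylim G Y0 T) i t)).
  { assert (Rabs (fst (ylim G Y0 T i t) - fst (step G Y0 T (ylim G Y0 T) i t)) <= 0).
    { apply (le_of_pow2 _ _ (2 * rho)). intros n; apply B. }
    pose proof (Rabs_pos (fst (ylim G Y0 T i t) - fst (step G Y0 T (ylim G Y0 T) i t))).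
    apply Rminus_diag_uniq. apply Rabs_eq_0. lra. }
  assert (E2 : snd (ylim G Y0 T i t) = snd (step G Y0 T (ylim G Y0 T) i t)).
  { assert (Rabs (snd (ylim G Y0 T i t) - snd (step G Y0 T (ylim G Y0 T) i t)) <= 0).
    { apply (le_of_pow2 _ _ (2 * rho)). intros n; apply B. }
    pose proof (Rabs_pos (snd (ylim G Y0 T i t) - snd (step G Y0 T (ylim G Y0 T) i t))).
    apply Rminus_diag_uniq. apply Rabs_eq_0. lra. }
  rewrite (surjective_pairing (ylim G Y0 T i t)), (surjective_pairing (step G Y0 T (ylim G Y0 T) i t)).
  rewrite E1, E2. auto.
Qed.

Lemma derive_int_clamp (g : R -> R) c0 T t : (forall x, continuous g x) -> 0 < t < T ->
  is_derive (fun s => c0 + RInt g 0 (clamp T s)) t (g t).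
Proof.
  intros hc ht.
  assert (D1 : is_derive (RInt g 0) t (g t)).
  { apply (is_derive_RInt g (RInt g 0) 0 t); [|apply hc].
    exists (mkposreal 1 Rlt_0_1). intros y _. apply (RInt_correct (V:=R_CompleteNormedModule)). apply cont_ex_RInt; auto. }
  pose proof (is_derive_plus (fun _ => c0) (RInt g 0) t zero (g t) (is_derive_const c0 t) D1) as D2.
  rewrite plus_zero_l in D2.
  apply (is_derive_ext_loc (fun x => plus c0 (RInt g 0 x))); auto.
  assert (he : 0 < Rmin t (T - t)) by (apply Rmin_pos; lra).
  exists (mkposreal _ he). intros y hy. apply ball_R in hy. simpl in hy.
  assert (Rmin t (T - t) <= t) by apply Rmin_l. assert (Rmin t (T - t) <= T - t) by apply Rmin_r.
  rewrite (clamp_id T y); [reflexivity|]. revert hy; split_Rabs; lra.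
Qed.

Lemma ode_exists N Y0 rho M Lc G T : fieldOK N Y0 rho M Lc G -> 0 <= rho -> 0 <= M -> 0 <= Lc ->
  0 <= T -> M * T <= rho -> Lc * T <= 1/2 ->
  exists Y : nat -> R -> R * R,
  (forall i, (i < N)%nat -> Y i 0 = Y0 i) /\
  (forall t, inK N Y0 rho (fun j => Y j t)) /\
  (forall i, (i < N)%nat -> cont_on T (fun s => fst (Y i s)) /\ cont_on T (fun s => snd (Y i s))) /\
  (forall i, (i < N)%nat -> forall t, 0 < t < T ->
     is_derive (fun s => fst (Y i s)) t (fst (G (fun j => Y j t) i)) /\
     is_derive (fun s => snd (Y i s)) t (snd (G (fun j => Y j t) i))).
Proof.
  intros hF hr hM hL hT hMT hLT.
  destruct (ylim_props N Y0 rho M Lc G T hF hr hM hL hT hMT hLT) as [CL YO].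
  pose proof (ylim_fix N Y0 rho M Lc G T hF hr hM hL hT hMT hLT) as FX.
  exists (ylim G Y0 T). split; [|split; [|split]].
  - intros i hi. rewrite FX by auto. unfold step. rewrite (clamp_id T 0) by lra.
    rewrite !RInt_point. change (zero : R) with 0. rewrite !Rplus_0_r. destruct (Y0 i); auto.
  - apply YO.
  - intros i hi. destruct YO as [_ P2].
    split; apply (cont_on_lip _ _ M hM); intros s t _ _; destruct (P2 s t i hi); auto.
  - intros i hi t ht.
    split.
    + apply (is_derive_ext (fun s => fst (step G Y0 T (ylim G Y0 T) i s))).
      { intros s. rewrite FX; auto. }
      unfold step; cbn [fst]. apply derive_int_clamp; auto.
      intros x; apply (integrand_cont N Y0 rho M Lc G _ i hF YO hi x).
    + apply (is_derive_ext (fun s => snd (step G Y0 T (ylim G Y0 T) i s))).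
      { intros s. rewrite FX; auto. }
      unfold step; cbn [snd]. apply derive_int_clamp; auto.
      intros x; apply (integrand_cont N Y0 rho M Lc G _ i hF YO hi x).
Qed.

Definition isTraj N T (G : (nat -> R * R) -> nat -> R * R) (Y0 : nat -> R * R) (Y : nat -> R -> R * R) : Prop :=
  (forall i, (i < N)%nat -> Y i 0 = Y0 i) /\
  (forall i, (i < N)%nat -> cont_on T (fun s => fst (Y i s)) /\ cont_on T (fun s => snd (Y i s))) /\
  (forall i, (i < N)%nat -> forall t, 0 < t < T ->
     is_derive (fun s => fst (Y i s)) t (fst (G (fun j => Y j t) i)) /\
     is_derive (fun s => snd (Y i s)) t (snd (G (fun j => Y j t) i))).

Lemma cont_on_sub T f c : cont_on T f -> cont_on T (fun s => f s - c).
Proof.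
  intros H. apply (cont_on_ext _ (fun u => - c + 0 * u + 1 * f u)); [intros; ring|].
  apply cont_on_affine; auto.
Qed.

Lemma cont_on_diff T f g : cont_on T f -> cont_on T g -> cont_on T (fun s => f s - g s).
Proof.
  intros Hf Hg t ht e he.
  destruct (Hf t ht (e/2)) as [d1 [hd1 H1]]; [lra|].
  destruct (Hg t ht (e/2)) as [d2 [hd2 H2]]; [lra|].
  exists (Rmin d1 d2). split; [apply Rmin_pos; auto|]. intros s hs hst.
  assert (Rabs (s - t) < d1) by (eapply Rlt_le_trans; [exact hst|apply Rmin_l]).
  assert (Rabs (s - t) < d2) by (eapply Rlt_le_trans; [exact hst|apply Rmin_r]).
  specialize (H1 s hs ltac:(assumption)). specialize (H2 s hs ltac:(assumption)).
  revert H1 H2. split_Rabs; lra.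
Qed.

Lemma is_derive_sub (f g : R -> R) x a b : is_derive f x a -> is_derive g x b -> is_derive (fun s => f s - g s) x (a - b).
Proof. intros Ha Hb. exact (is_derive_minus f g x a b Ha Hb). Qed.

Lemma apriori_K N T G Y0 rho M Y : 0 <= T -> 0 <= M -> M * T < rho ->
  (forall Z, inK N Y0 rho Z -> forall i, (i < N)%nat -> Rabs (fst (G Z i)) <= M /\ Rabs (snd (G Z i)) <= M) ->
  isTraj N T G Y0 Y ->
  forall t, 0 <= t <= T -> inK N Y0 (M * T) (fun j => Y j t).
Proof.
  intros hT hM hMT Hb [H0 [Hc Hd]] t ht.
  intros i hi. assert (0 <= M * T) by (apply Rmult_le_pos; lra).
  apply (cont_ind N T rho (M * T) (fun i t => fst (Y i t) - fst (Y0 i)) (fun i t => snd (Y i t) - snd (Y0 i))); auto.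
  - intros k hk. destruct (Hc k hk). split; apply cont_on_sub; auto.
  - intros k hk. rewrite (H0 k hk), !Rminus_diag, Rabs_R0. lra.
  - intros t' ht' Hg k hk.
    assert (Kin : forall s, 0 < s < t' -> inK N Y0 rho (fun j => Y j s)).
    { intros s hs j hj. apply (Hg s ltac:(lra) j hj). }
    rewrite <- (H0 k hk).
    assert (hMt : M * t' <= M * T).
    { apply Rmult_le_compat_l; lra. }
    destruct (Hc k hk) as [c1 c2].
    split; (eapply Rle_trans; [|exact hMt]).
    + apply (mvt_bound T M (fun s => fst (Y k s)) (fun s => fst (G (fun j => Y j s) k))); auto.
      * intros s hs. apply Hd; auto; lra.
      * intros s hs. apply (Hb _ (Kin s hs) k hk).
    + apply (mvt_bound T M (fun s => snd (Y k s)) (fun s => snd (G (fun j => Y j s) k))); auto.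
      * intros s hs. apply Hd; auto; lra.
      * intros s hs. apply (Hb _ (Kin s hs) k hk).
Qed.

Lemma apriori_diff N T G1 G2 Y0 rho Lc c Y Z : 0 <= T -> 0 <= Lc -> Lc * T <= 1/2 -> 0 < c * T ->
  (forall A B eta, inK N Y0 rho A -> inK N Y0 rho B -> clz N eta A B -> clz N (Lc * eta) (G1 A) (G1 B)) ->
  (forall A, inK N Y0 rho A -> clz N c (G1 A) (G2 A)) ->
  isTraj N T G1 Y0 Y -> isTraj N T G2 Y0 Z ->
  (forall t, 0 <= t <= T -> inK N Y0 rho (fun j => Y j t)) ->
  (forall t, 0 <= t <= T -> inK N Y0 rho (fun j => Z j t)) ->
  forall t, 0 <= t <= T -> clz N (3 * c * T) (fun j => Y j t) (fun j => Z j t).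
Proof.
  intros hT hL hLT hcT Hl Hdf [Y0e [Yc Yd]] [Z0e [Zc Zd]] YK ZK t ht i hi.
  assert (hc : 0 < c) by (destruct (Rle_dec c 0); [nra|lra]).
  assert (R1 : goodP N (5/2 * c * T) (fun i t => fst (Y i t) - fst (Z i t)) (fun i t => snd (Y i t) - snd (Z i t)) t).
  { apply (cont_ind N T (3 * c * T)); auto; [nra| | |].
    - intros k hk. destruct (Yc k hk), (Zc k hk). split; apply cont_on_diff; auto.
    - intros k hk. rewrite (Y0e k hk), (Z0e k hk), !Rminus_diag, Rabs_R0. split; nra.
    - intros t' ht' Hg k hk.
      assert (bd : forall s, 0 < s < t' -> clz N (Lc * (3 * c * T) + c)
                   (G1 (fun j => Y j s)) (G2 (fun j => Z j s))).
      { intros s hs j hj.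
        assert (hs' : 0 <= s <= T) by lra.
        assert (cl : clz N (3 * c * T) (fun j => Y j s) (fun j => Z j s)).
        { intros l hl. apply (Hg s ltac:(lra) l hl). }
        destruct (Hl _ _ _ (YK s hs') (ZK s hs') cl j hj) as [a1 a2].
        destruct (Hdf _ (ZK s hs') j hj) as [b1 b2].
        split; [revert a1 b1|revert a2 b2]; split_Rabs; lra. }
      assert (fin : (Lc * (3 * c * T) + c) * t' <= 5/2 * c * T).
      { assert (Lc * (3 * c * T) * t' <= 3 * c * T * (1/2)).
        { replace (Lc * (3 * c * T) * t') with ((3 * c * T) * (Lc * t')) by ring.
          apply Rmult_le_compat_l; [nra|]. apply Rle_trans with (Lc * T); [apply Rmult_le_compat_l; lra|lra]. }
        nra. }
      destruct (Yc k hk) as [yc1 yc2]. destruct (Zc k hk) as [zc1 zc2].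
      split; (eapply Rle_trans; [|exact fin]).
      + replace (fst (Y k t') - fst (Z k t')) with ((fst (Y k t') - fst (Z k t')) - (fst (Y k 0) - fst (Z k 0)))
          by (rewrite (Y0e k hk), (Z0e k hk); ring).
        apply (mvt_bound T _ (fun s => fst (Y k s) - fst (Z k s))
                 (fun s => fst (G1 (fun j => Y j s) k) - fst (G2 (fun j => Z j s) k))); auto.
        * apply cont_on_diff; auto.
        * intros s hs. apply is_derive_sub; [apply Yd|apply Zd]; auto; lra.
        * intros s hs. apply (bd s hs k hk).
      + replace (snd (Y k t') - snd (Z k t')) with ((snd (Y k t') - snd (Z k t')) - (snd (Y k 0) - snd (Z k 0)))
          by (rewrite (Y0e k hk), (Z0e k hk); ring).
        apply (mvt_bound T _ (fun s => snd (Y k s) - snd (Z k s))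
                 (fun s => snd (G1 (fun j => Y j s) k) - snd (G2 (fun j => Z j s) k))); auto.
        * apply cont_on_diff; auto.
        * intros s hs. apply is_derive_sub; [apply Yd|apply Zd]; auto; lra.
        * intros s hs. apply (bd s hs k hk). }
  destruct (R1 i hi). split; nra.
Qed.

Lemma fold_min_props x t : (In (fold_right Rmin x t) (x :: t)) /\ forall y, In y (x :: t) -> fold_right Rmin x t <= y.
Proof.
  induction t as [|a t [IH1 IH2]]; simpl.
  - split; [auto|]. intros y [<-|[]]; lra.
  - split.
    + destruct (Rle_dec a (fold_right Rmin x t)).
      * rewrite Rmin_left by auto. simpl; auto.
      * rewrite Rmin_right by lra. simpl in IH1 |- *. tauto.
    + intros y [<-|[<-|h2]].
      * eapply Rle_trans; [apply Rmin_r|]. apply IH2; simpl; auto.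
      * apply Rmin_l.
      * eapply Rle_trans; [apply Rmin_r|]. apply IH2; simpl; auto.
Qed.

Lemma d0_props N Y0 : (2 <= N)%nat ->
  (forall j k, (j < N)%nat -> (k < N)%nat -> j <> k -> snd (Y0 j) <> snd (Y0 k)) ->
  0 < d0 N Y0 /\ forall i j, (i < N)%nat -> (j < N)%nat -> i <> j -> 4 * d0 N Y0 <= Rabs (snd (Y0 i) - snd (Y0 j)).
Proof.
  intros hN hd.
  set (l := flat_map (fun j => flat_map (fun k => if Nat.eqb j k then nil
                          else Rabs (snd (Y0 j) - snd (Y0 k)) :: nil) (seq 0 N)) (seq 0 N)).
  assert (Hin : forall y, In y l <-> exists j k, (j < N)%nat /\ (k < N)%nat /\ j <> k /\ y = Rabs (snd (Y0 j) - snd (Y0 k))).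
  { intros y. unfold l. rewrite in_flat_map. split.
    - intros [j [hj hy]]. rewrite in_flat_map in hy. destruct hy as [k [hk hy]].
      apply in_seq in hj. apply in_seq in hk.
      destruct (Nat.eqb_spec j k); [destruct hy|]. destruct hy as [<-|[]].
      exists j, k. repeat split; lia.
    - intros [j [k [hj [hk [hjk ->]]]]]. exists j. split; [apply in_seq; lia|].
      rewrite in_flat_map. exists k. split; [apply in_seq; lia|].
      destruct (Nat.eqb_spec j k); [lia|]. left; auto. }
  assert (Hne : In (Rabs (snd (Y0 0%nat) - snd (Y0 1%nat))) l) by (apply Hin; exists 0%nat, 1%nat; repeat split; lia).
  destruct l as [|x t] eqn:El; [destruct Hne|].
  assert (D : d0 N Y0 = / 4 * fold_right Rmin x t) by (unfold d0; fold l; rewrite El; reflexivity).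
  destruct (fold_min_props x t) as [m1 m2].
  split.
  - rewrite D. apply Rmult_lt_0_compat; [lra|].
    apply Hin in m1. destruct m1 as [j [k [hj [hk [hjk e]]]]].
    rewrite e. apply Rabs_pos_lt. specialize (hd j k hj hk hjk). lra.
  - intros i j hi hj hij. rewrite D.
    assert (fold_right Rmin x t <= Rabs (snd (Y0 i) - snd (Y0 j))).
    { apply m2. apply Hin. exists i, j; auto. }
    lra.
Qed.

Lemma FY_Gd N gamma rs Y i : 0 < rs -> F_Y N gamma rs Y i = Gd N gamma rs 0 Y i.
Proof.
  intros hrs. unfold F_Y, Gd, hr, tz, tr. f_equal. f_equal.
  pose proof PI_RGT_0. field. lra.
Qed.

Definition toX zs rs v s t (Y : nat -> R * R) : nat -> R * R :=
  fun j => (zs + v * t + fst (Y j) / s, rs + snd (Y j) / s).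

Lemma sq_ne0 (a b : R * R) : a <> b -> sqnorm (fst a - fst b, snd a - snd b) <> 0.
Proof.
  intros hne h. apply hne. unfold sqnorm in h; cbn [fst snd] in h.
  rewrite <- !Rsqr_pow2 in h. apply Rplus_sqr_eq_0 in h. destruct h as [h1 h2].
  rewrite (surjective_pairing a), (surjective_pairing b). f_equal; lra.
Qed.

Lemma term_scale a1 a2 b1 b2 c1 c2 s : s <> 0 -> sqnorm (a1 - b1, a2 - b2) <> 0 ->
  - ((c2 + a2 / s) - (c2 + b2 / s)) / sqnorm ((c1 + a1 / s) - (c1 + b1 / s), (c2 + a2 / s) - (c2 + b2 / s))
  = s * (- (a2 - b2) / sqnorm (a1 - b1, a2 - b2)) /\
  ((c1 + a1 / s) - (c1 + b1 / s)) / sqnorm ((c1 + a1 / s) - (c1 + b1 / s), (c2 + a2 / s) - (c2 + b2 / s))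
  = s * ((a1 - b1) / sqnorm (a1 - b1, a2 - b2)).
Proof.
  intros hs hq. unfold sqnorm in *; cbn [fst snd] in *.
  assert (E : (c1 + a1 / s - (c1 + b1 / s)) ^ 2 + (c2 + a2 / s - (c2 + b2 / s)) ^ 2 = ((a1 - b1) ^ 2 + (a2 - b2) ^ 2) / (s * s))
    by (field; auto).
  rewrite E. split; field; auto.
Qed.

Lemma FX_Gd N gamma eps zs rs s t Y i : 0 < rs -> 0 < s -> lnabs eps = s * s -> rs + snd (Y i) / s <> 0 ->
  (forall j, (j < N)%nat -> j <> i -> sqnorm (fst (Y i) - fst (Y j), snd (Y i) - snd (Y j)) <> 0) ->
  F_X N gamma eps (toX zs rs (gamma / (4 * PI * rs)) s t Y) i =
  (gamma / (4 * PI * rs) + fst (Gd N gamma rs (1 / s) Y i) / s, snd (Gd N gamma rs (1 / s) Y i) / s).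
Proof.
  intros hrs hs hL hX Hq. unfold F_X.
  set (X := toX zs rs (gamma / (4 * PI * rs)) s t Y).
  assert (Ez : sum_ne N i (fun j => - (snd (X i) - snd (X j)) / sqnorm (fst (X i) - fst (X j), snd (X i) - snd (X j)))
               = s * sum_ne N i (fun j => tz Y i j)).
  { apply sum_ne_scal_ext. intros j hj hji. unfold X, toX, tz; cbn [fst snd]. apply term_scale; [lra|]. apply Hq; auto. }
  assert (Er : sum_ne N i (fun j => (fst (X i) - fst (X j)) / sqnorm (fst (X i) - fst (X j), snd (X i) - snd (X j)))
               = s * sum_ne N i (fun j => tr Y i j)).
  { apply sum_ne_scal_ext. intros j hj hji. unfold X, toX, tr; cbn [fst snd]. apply term_scale; [lra|]. apply Hq; auto. }
  rewrite Ez, Er. unfold X.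
  unfold Gd, hr, toX; cbn [fst snd]. rewrite hL.
  set (Sz := sum_ne N i (fun j => tz Y i j)). set (Sr := sum_ne N i (fun j => tr Y i j)).
  pose proof PI_RGT_0.
  assert (rs + 1 / s * snd (Y i) <> 0) by (replace (rs + 1 / s * snd (Y i)) with (rs + snd (Y i) / s) by (field; lra); auto).
  assert (rs * s + snd (Y i) <> 0).
  { intro h; apply hX. replace (rs + snd (Y i) / s) with ((rs * s + snd (Y i)) / s) by (field; lra).
    rewrite h. unfold Rdiv; ring. }
  f_equal; field; repeat split; lra.
Qed.

Lemma is_derive_affine (f : R -> R) t a p q c :
  is_derive f t a -> is_derive (fun u => p + q * u + c * f u) t (q + c * a).
Proof.
  intros H.
  pose proof (is_derive_plus (fun u => p + q * u) (fun u => c * f u) t q (c * a)) as D.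
  assert (D1 : is_derive (fun u => p + q * u) t q).
  { pose proof (is_derive_plus (fun _ => p) (fun u => q * u) t zero q (is_derive_const p t)) as D2.
    rewrite plus_zero_l in D2. apply D2.
    pose proof (is_derive_scal (fun u => u) t q 1 (is_derive_id (K:=R_AbsRing) t)) as D3.
    rewrite Rmult_1_r in D3. exact D3. }
  exact (D D1 (is_derive_scal f t c a H)).
Qed.

Lemma is_derive_extR (f g : R -> R) x l : (forall t, f t = g t) -> is_derive f x l -> is_derive g x l.
Proof. apply is_derive_ext. Qed.

Lemma no_coll_gap N Y0 rho m Y : 0 < m -> inK N Y0 rho Y ->
  (forall i j, (i < N)%nat -> (j < N)%nat -> i <> j -> m + 2 * rho <= Rabs (snd (Y0 i) - snd (Y0 j))) ->
  forall i j, (i < N)%nat -> (j < N)%nat -> i <> j -> snd (Y i) <> snd (Y j).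
Proof.
  intros hm hK hg i j hi hj hij e.
  pose proof (gap_K N Y0 rho m Y i j hK hi hj (hg i j hi hj hij)). rewrite e, Rminus_diag, Rabs_R0 in H. lra.
Qed.

Lemma Yt_traj N T gamma rs Y0 Yt : 0 < rs ->
  is_sol N T (no_collision N) (F_Y N gamma rs) Y0 Yt -> isTraj N T (Gd N gamma rs 0) Y0 Yt.
Proof.
  intros hrs [H0 [_ [Hc Hd]]]. split; [auto|split; [auto|]].
  intros i hi t ht. rewrite <- FY_Gd by auto. apply Hd; auto.
Qed.

Lemma Yt_sol N T gamma rs Y0 rho m Yt : 0 < rs -> 0 < m ->
  (forall i j, (i < N)%nat -> (j < N)%nat -> i <> j -> m + 2 * rho <= Rabs (snd (Y0 i) - snd (Y0 j))) ->
  isTraj N T (Gd N gamma rs 0) Y0 Yt -> (forall t, 0 <= t <= T -> inK N Y0 rho (fun j => Yt j t)) ->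
  is_sol N T (no_collision N) (F_Y N gamma rs) Y0 Yt.
Proof.
  intros hrs hm hg [H0 [Hc Hd]] HK. split; [auto|split; [|split; [auto|]]].
  - intros t ht i j hi hj hij e. apply (no_coll_gap N Y0 rho m (fun j => Yt j t) hm (HK t ht) hg i j hi hj hij).
    simpl. rewrite e. auto.
  - intros i hi t ht. rewrite FY_Gd by auto. apply Hd; auto.
Qed.

Definition toY zs rs v s (X : nat -> R -> R * R) (i : nat) (t : R) : R * R :=
  (s * (fst (X i t) - zs - v * t), s * (snd (X i t) - rs)).

Lemma toX_toY zs rs v s X t i : 0 < s -> toX zs rs v s t (fun j => toY zs rs v s X j t) i = X i t.
Proof.
  intros hs. unfold toX, toY; cbn [fst snd]. rewrite (surjective_pairing (X i t)) at 3.
  f_equal; field; lra.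
Qed.

Lemma X_to_Y N T gamma eps zs rs Y0 X : 0 < rs -> 0 < lnabs eps ->
  is_sol N T (ok_X N) (F_X N gamma eps) (X0eps zs rs eps Y0) X ->
  isTraj N T (Gd N gamma rs (1 / sqrt (lnabs eps))) Y0
    (toY zs rs (gamma / (4 * PI * rs)) (sqrt (lnabs eps)) X).
Proof.
  intros hrs hL [H0 [Hok [Hc Hd]]].
  set (s := sqrt (lnabs eps)). set (v := gamma / (4 * PI * rs)).
  assert (hs : 0 < s) by (apply sqrt_lt_R0; auto).
  assert (hss : lnabs eps = s * s) by (unfold s; rewrite sqrt_sqrt; lra).
  split; [|split].
  - intros i hi. unfold toY. rewrite (H0 i hi). unfold X0eps; cbn [fst snd]. fold s.
    rewrite (surjective_pairing (Y0 i)) at 3. f_equal; field; lra.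
  - intros i hi. destruct (Hc i hi) as [c1 c2]. unfold toY; cbn [fst snd]. split.
    + apply (cont_on_ext _ (fun u => - (s * zs) + (- (s * v)) * u + s * fst (X i u))); [intros; ring|].
      apply cont_on_affine; auto.
    + apply (cont_on_ext _ (fun u => - (s * rs) + 0 * u + s * snd (X i u))); [intros; ring|].
      apply cont_on_affine; auto.
  - intros i hi t ht.
    assert (ht' : 0 <= t <= T) by lra.
    destruct (Hok t ht') as [Hnc Hpos].
    assert (EX : (fun j => X j t) = toX zs rs v s t (fun j => toY zs rs v s X j t)).
    { apply functional_extensionality. intros j. rewrite toX_toY; auto. }
    assert (Hq : forall j, (j < N)%nat -> j <> i ->
              sqnorm (fst (toY zs rs v s X i t) - fst (toY zs rs v s X j t),
                      snd (toY zs rs v s X i t) - snd (toY zs rs v s X j t)) <> 0).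
    { intros j hj hji. apply sq_ne0. intros e. apply (Hnc i j hi hj (fun h => hji (eq_sym h))).
      rewrite <- (toX_toY zs rs v s X t i), <- (toX_toY zs rs v s X t j) by auto.
      unfold toX. rewrite e. auto. }
    assert (hr : rs + snd (toY zs rs v s X i t) / s <> 0).
    { specialize (Hpos i hi). cbn beta in Hpos. unfold toY; cbn [snd].
      replace (rs + s * (snd (X i t) - rs) / s) with (snd (X i t)) by (field; lra). lra. }
    pose proof (FX_Gd N gamma eps zs rs s t (fun j => toY zs rs v s X j t) i hrs hs hss hr Hq) as FE.
    fold v in FE. rewrite <- EX in FE.
    destruct (Hd i hi t ht) as [d1 d2]. rewrite FE in d1, d2. cbn [fst snd] in d1, d2.
    split.
    + apply (is_derive_extR (fun u => - (s * zs) + (- (s * v)) * u + s * fst (X i u))); [intros; unfold toY; cbn [fst]; ring|].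
      replace (fst (Gd N gamma rs (1 / s) (fun j => toY zs rs v s X j t) i))
        with (- (s * v) + s * (v + fst (Gd N gamma rs (1 / s) (fun j => toY zs rs v s X j t) i) / s)) by (field; lra).
      apply is_derive_affine; auto.
    + apply (is_derive_extR (fun u => - (s * rs) + 0 * u + s * snd (X i u))); [intros; unfold toY; cbn [snd]; ring|].
      replace (snd (Gd N gamma rs (1 / s) (fun j => toY zs rs v s X j t) i))
        with (0 + s * (snd (Gd N gamma rs (1 / s) (fun j => toY zs rs v s X j t) i) / s)) by (field; lra).
      apply is_derive_affine; auto.
Qed.

Lemma Y_to_X N T gamma eps zs rs Y0 rho m Rb Y : 0 < lnabs eps ->
  params N Y0 gamma rs m rho Rb (1 / sqrt (lnabs eps)) ->
  isTraj N T (Gd N gamma rs (1 / sqrt (lnabs eps))) Y0 Y ->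
  (forall t, 0 <= t <= T -> inK N Y0 rho (fun j => Y j t)) ->
  is_sol N T (ok_X N) (F_X N gamma eps) (X0eps zs rs eps Y0)
    (fun i t => toX zs rs (gamma / (4 * PI * rs)) (sqrt (lnabs eps)) t (fun j => Y j t) i).
Proof.
  intros hL hP [H0 [Hc Hd]] HK.
  pose proof hP as [hg [hrs [hm [hrho [Hgap [HRb [hdl hdR]]]]]]].
  set (s := sqrt (lnabs eps)) in *. set (v := gamma / (4 * PI * rs)).
  assert (hs : 0 < s) by (apply sqrt_lt_R0; auto).
  assert (hss : lnabs eps = s * s) by (unfold s; rewrite sqrt_sqrt; lra).
  assert (pos : forall t i, 0 <= t <= T -> (i < N)%nat -> 0 < rs + snd (Y i t) / s).
  { intros t i ht hi. pose proof (K_Rb N Y0 rho Rb (fun j => Y j t) i (HK t ht) hi HRb) as hb. cbn beta in hb.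
    assert (- Rb <= snd (Y i t)) by (revert hb; split_Rabs; lra).
    assert (1 / s * (- Rb) >= - (rs / 2)) by lra.
    replace (snd (Y i t) / s) with (1 / s * snd (Y i t)) by (field; lra).
    assert (0 < 1 / s) by (apply Rdiv_lt_0_compat; lra).
    assert (1 / s * snd (Y i t) >= 1 / s * (- Rb)) by (apply Rmult_ge_compat_l; lra).
    lra. }
  assert (ncY : forall t i j, 0 <= t <= T -> (i < N)%nat -> (j < N)%nat -> i <> j -> snd (Y i t) <> snd (Y j t)).
  { intros t i j ht hi hj hij. apply (no_coll_gap N Y0 rho m (fun j => Y j t) hm (HK t ht) Hgap i j hi hj hij). }
  split; [|split; [|split]].
  - intros i hi. unfold toX, X0eps. rewrite (H0 i hi). fold s. f_equal. ring.
  - intros t ht. split.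
    + intros i j hi hj hij e. unfold toX in e. apply (f_equal snd) in e. cbn [snd] in e.
      apply (ncY t i j ht hi hj hij).
      apply (Rmult_eq_reg_r (/ s)); [|apply Rinv_neq_0_compat; lra]. unfold Rdiv in e. lra.
    + intros i hi. unfold toX; cbn [snd]. apply pos; auto.
  - intros i hi. destruct (Hc i hi) as [c1 c2]. unfold toX; cbn [fst snd]. split.
    + apply (cont_on_ext _ (fun u => zs + v * u + (1 / s) * fst (Y i u))); [intros; unfold Rdiv; ring|].
      apply cont_on_affine; auto.
    + apply (cont_on_ext _ (fun u => rs + 0 * u + (1 / s) * snd (Y i u))); [intros; unfold Rdiv; ring|].
      apply cont_on_affine; auto.
  - intros i hi t ht.
    assert (ht' : 0 <= t <= T) by lra.
    assert (Hq : forall j, (j < N)%nat -> j <> i ->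
              sqnorm (fst (Y i t) - fst (Y j t), snd (Y i t) - snd (Y j t)) <> 0).
    { intros j hj hji. apply sq_ne0. intros e. apply (ncY t i j ht' hi hj (fun h => hji (eq_sym h))).
      rewrite e. auto. }
    assert (hr : rs + snd (Y i t) / s <> 0) by (pose proof (pos t i ht' hi); lra).
    pose proof (FX_Gd N gamma eps zs rs s t (fun j => Y j t) i hrs hs hss hr Hq) as FE.
    fold v in FE.
    assert (FE' : F_X N gamma eps (fun j => toX zs rs v s t (fun j0 => Y j0 t) j) i =
       (v + fst (Gd N gamma rs (1 / s) (fun j => Y j t) i) / s, snd (Gd N gamma rs (1 / s) (fun j => Y j t) i) / s)) by exact FE.
    rewrite FE'. cbn [fst snd].
    destruct (Hd i hi t ht) as [d1 d2]. unfold toX; cbn [fst snd].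
    split.
    + apply (is_derive_extR (fun u => zs + v * u + (1 / s) * fst (Y i u))); [intros; unfold Rdiv; ring|].
      replace (v + fst (Gd N gamma rs (1 / s) (fun j => Y j t) i) / s)
        with (v + 1 / s * fst (Gd N gamma rs (1 / s) (fun j => Y j t) i)) by (field; lra).
      apply is_derive_affine; auto.
    + apply (is_derive_extR (fun u => rs + 0 * u + (1 / s) * snd (Y i u))); [intros; unfold Rdiv; ring|].
      replace (snd (Gd N gamma rs (1 / s) (fun j => Y j t) i) / s)
        with (0 + 1 / s * snd (Gd N gamma rs (1 / s) (fun j => Y j t) i)) by (field; lra).
      apply is_derive_affine; auto.
Qed.

Lemma dist2_le a b c d : dist2 (a, b) (c, d) <= Rabs (a - c) + Rabs (b - d).
Proof.
  unfold dist2; cbn [fst snd].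
  pose proof (Rabs_pos (a - c)). pose proof (Rabs_pos (b - d)).
  rewrite <- (sqrt_pow2 (Rabs (a - c) + Rabs (b - d))) by lra.
  apply sqrt_le_1_alt.
  rewrite <- (pow2_abs (a - c)), <- (pow2_abs (b - d)). nra.
Qed.

Lemma inA_toX zs rs v s t eps y y0 d h Rb : s = sqrt (lnabs eps) -> 0 < s ->
  Rabs (fst y - fst y0) <= d -> Rabs (snd y - snd y0) <= d -> Rabs (fst y) <= Rb ->
  0 <= v * t <= h / 2 -> Rb / s <= h / 2 ->
  inA zs eps (rs + snd y0 / s) d h (zs + v * t + fst y / s, rs + snd y / s).
Proof.
  intros es hs h1 h2 h3 h4 h5. unfold inA; cbn [fst snd]. rewrite <- es. split.
  - replace (rs + snd y / s - (rs + snd y0 / s)) with ((snd y - snd y0) / s) by (field; lra).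
    unfold Rdiv. rewrite Rabs_mult, (Rabs_right (/ s)) by (apply Rle_ge, Rlt_le, Rinv_0_lt_compat; lra).
    apply Rmult_le_compat_r; [apply Rlt_le, Rinv_0_lt_compat; lra|auto].
  - replace (zs + v * t + fst y / s - zs) with (v * t + fst y / s) by ring.
    eapply Rle_trans; [apply Rabs_triang|]. rewrite Rabs_right by lra.
    assert (Rabs (fst y / s) <= Rb / s).
    { unfold Rdiv. rewrite Rabs_mult, (Rabs_right (/ s)) by (apply Rle_ge, Rlt_le, Rinv_0_lt_compat; lra).
      apply Rmult_le_compat_r; [apply Rlt_le, Rinv_0_lt_compat; lra|auto]. }
    lra.
Qed.

Lemma inK_mono N Y0 a b Y : a <= b -> inK N Y0 a Y -> inK N Y0 b Y.
Proof. intros h H i hi. destruct (H i hi); split; lra. Qed.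

Lemma fieldOK_Gd N Y0 gamma rs m rho Rb dl : params N Y0 gamma rs m rho Rb dl ->
  fieldOK N Y0 rho (Mb N gamma rs m Rb) (Lb N gamma rs m) (Gd N gamma rs dl).
Proof.
  intros hP. split.
  - intros Y hY i hi. apply (Gd_bound N Y0 gamma rs m rho Rb dl Y hP hY i hi).
  - intros Y Z eta hY hZ hc. apply (Gd_lip N Y0 gamma rs m rho Rb dl Y Z eta hP hY hZ hc).
Qed.

Lemma toX_diff zs v t s a b : 0 < s -> Rabs (a - b) <= v ->
  Rabs ((zs + t + a / s) - (zs + t + b / s)) <= v / s.
Proof.
  intros hs h. replace ((zs + t + a / s) - (zs + t + b / s)) with ((a - b) / s) by (field; lra).
  unfold Rdiv. rewrite Rabs_mult, (Rabs_right (/ s)) by (apply Rle_ge, Rlt_le, Rinv_0_lt_compat; lra).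
  apply Rmult_le_compat_r; [apply Rlt_le, Rinv_0_lt_compat; lra|auto].
Qed.

Lemma lnabs_facts eps e0 : 0 < eps -> eps <= e0 -> eps < 1 -> 0 < e0 ->
  0 < lnabs eps /\ - ln e0 <= lnabs eps.
Proof.
  intros h1 h2 h3 h4. unfold lnabs.
  assert (ln eps < 0) by (rewrite <- ln_1; apply ln_increasing; lra).
  assert (ln eps <= ln e0) by (apply ln_le; lra).
  rewrite Rabs_left by lra. lra.
Qed.

Theorem lemma5p3 (N : nat) (zs rs : R) (Y0 : nat -> R * R) (gamma h0 : R) :
  (2 <= N)%nat -> 0 < rs ->
  (forall j k, (j < N)%nat -> (k < N)%nat -> j <> k -> snd (Y0 j) <> snd (Y0 k)) ->
  0 < gamma -> 0 < h0 ->
  exists TX eps0 C, 0 < TX /\ 0 < eps0 /\ 0 < C /\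
    forall eps, 0 < eps <= eps0 -> eps < 1 ->
      (* the solutions exist on [0, TX] *)
      (exists X, is_sol N TX (ok_X N) (F_X N gamma eps) (X0eps zs rs eps Y0) X) /\
      (exists Yt, is_sol N TX (no_collision N) (F_Y N gamma rs) Y0 Yt) /\
      (* and (every such solution, i.e. the solution) satisfies the estimates *)
      (forall X Yt,
         is_sol N TX (ok_X N) (F_X N gamma eps) (X0eps zs rs eps Y0) X ->
         is_sol N TX (no_collision N) (F_Y N gamma rs) Y0 Yt ->
         forall t i, 0 <= t <= TX -> (i < N)%nat ->
           inA zs eps (snd (X0eps zs rs eps Y0 i)) (d0 N Y0) h0 (X i t) /\
           inA zs eps (snd (X0eps zs rs eps Y0 i)) (d0 N Y0) h0
               (Xtilde zs rs gamma eps Yt i t) /\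
           dist2 (X i t) (Xtilde zs rs gamma eps Yt i t) <= C / lnabs eps).
Proof.
  intros hN hrs hdist hg hh.
  destruct (d0_props N Y0 hN hdist) as [hd0 hgap].
  set (dd := d0 N Y0) in *.
  set (Rb := sumR N (fun i => Rabs (fst (Y0 i)) + Rabs (snd (Y0 i))) + dd).
  assert (Hterm : forall i, (i < N)%nat -> Rabs (fst (Y0 i)) + Rabs (snd (Y0 i)) <= Rb - dd).
  { intros i hi. unfold Rb. ring_simplify.
    apply (sumR_nonneg_le N (fun i => Rabs (fst (Y0 i)) + Rabs (snd (Y0 i)))); auto.
    intros k _. pose proof (Rabs_pos (fst (Y0 k))). pose proof (Rabs_pos (snd (Y0 k))). lra. }
  assert (HRb1 : forall i, (i < N)%nat -> Rabs (snd (Y0 i)) + dd <= Rb).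
  { intros i hi. specialize (Hterm i hi). pose proof (Rabs_pos (fst (Y0 i))). lra. }
  assert (HRb2 : forall i, (i < N)%nat -> Rabs (fst (Y0 i)) + dd <= Rb).
  { intros i hi. specialize (Hterm i hi). pose proof (Rabs_pos (snd (Y0 i))). lra. }
  assert (hRb : 0 < Rb).
  { specialize (HRb1 0%nat ltac:(lia)). pose proof (Rabs_pos (snd (Y0 0%nat))). lra. }
  set (m := 2 * dd).
  assert (hm : 0 < m) by (unfold m; lra).
  assert (Hgap : forall i j, (i < N)%nat -> (j < N)%nat -> i <> j -> m + 2 * dd <= Rabs (snd (Y0 i) - snd (Y0 j))).
  { intros i j hi hj hij. specialize (hgap i j hi hj hij). unfold m. lra. }
  set (dl0 := Rmin (rs / (2 * Rb)) (h0 / (2 * Rb))).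
  assert (hdl0 : 0 < dl0) by (unfold dl0; apply Rmin_pos; apply Rdiv_lt_0_compat; lra).
  assert (hdl0a : dl0 * Rb <= rs / 2).
  { apply Rle_trans with (rs / (2 * Rb) * Rb); [apply Rmult_le_compat_r; [lra|apply Rmin_l]|].
    right. field. lra. }
  assert (hdl0b : dl0 * Rb <= h0 / 2).
  { apply Rle_trans with (h0 / (2 * Rb) * Rb); [apply Rmult_le_compat_r; [lra|apply Rmin_r]|].
    right. field. lra. }
  destruct (g_pos gamma hg) as [g2 g4].
  pose proof PI_RGT_0 as hPI.
  pose proof (pos_INR N) as hNR.
  set (M := Mb N gamma rs m Rb).
  set (Lc := Lb N gamma rs m).
  set (v := gamma / (4 * PI * rs)).
  set (Dc := Db gamma rs Rb).
  assert (hM : 0 < M).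
  { unfold M, Mb. assert (0 <= INR N * (1 / m)) by (apply Rmult_le_pos; [lra|apply Rlt_le, Rdiv_lt_0_compat; lra]).
    assert (0 < Rb / (rs * (rs / 2))) by (apply Rdiv_lt_0_compat; [lra|apply Rmult_lt_0_compat; lra]).
    assert (0 <= gamma / (2 * PI) * (INR N * (1 / m))) by (apply Rmult_le_pos; lra).
    assert (0 < gamma / (4 * PI) * (Rb / (rs * (rs / 2)))) by (apply Rmult_lt_0_compat; lra).
    lra. }
  assert (hLc : 0 < Lc).
  { unfold Lc, Lb. assert (0 < m ^ 2) by (apply pow_lt; lra).
    assert (0 <= INR N * (3 / m ^ 2)) by (apply Rmult_le_pos; [lra|apply Rlt_le, Rdiv_lt_0_compat; lra]).
    assert (0 < 1 / (rs / 2 * (rs / 2))) by (apply Rdiv_lt_0_compat; [lra|apply Rmult_lt_0_compat; lra]).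
    assert (0 <= gamma / (2 * PI) * (INR N * (3 / m ^ 2))) by (apply Rmult_le_pos; lra).
    assert (0 < gamma / (4 * PI) * (1 / (rs / 2 * (rs / 2)))) by (apply Rmult_lt_0_compat; lra).
    lra. }
  assert (hv : 0 < v) by (unfold v; apply Rdiv_lt_0_compat; [lra|]; apply Rmult_lt_0_compat; lra).
  assert (hDc : 0 < Dc).
  { unfold Dc, Db. apply Rmult_lt_0_compat; [lra|]. apply Rdiv_lt_0_compat; [nra|].
    apply Rmult_lt_0_compat; [apply Rmult_lt_0_compat|]; lra. }
  set (T := Rmin (Rmin (dd / (2 * (M + 1))) (1 / (2 * (Lc + 1)))) (h0 / (2 * (v + 1)))).
  assert (hT1 : T <= dd / (2 * (M + 1))) by (unfold T; eapply Rle_trans; [apply Rmin_l|apply Rmin_l]).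
  assert (hT2 : T <= 1 / (2 * (Lc + 1))) by (unfold T; eapply Rle_trans; [apply Rmin_l|apply Rmin_r]).
  assert (hT3 : T <= h0 / (2 * (v + 1))) by (unfold T; apply Rmin_r).
  assert (hT : 0 < T).
  { unfold T. repeat apply Rmin_pos; apply Rdiv_lt_0_compat; lra. }
  assert (hMT : M * T < dd).
  { apply Rle_lt_trans with (M * (dd / (2 * (M + 1)))); [apply Rmult_le_compat_l; lra|].
    replace (M * (dd / (2 * (M + 1)))) with (dd * (M / (2 * (M + 1)))) by (field; lra).
    assert (M / (2 * (M + 1)) < 1).
    { apply (Rmult_lt_reg_r (2 * (M + 1))); [lra|]. unfold Rdiv. rewrite Rmult_assoc, Rinv_l by lra. lra. }
    assert (0 < M / (2 * (M + 1))) by (apply Rdiv_lt_0_compat; lra).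
    nra. }
  assert (hLT : Lc * T <= 1 / 2).
  { apply Rle_trans with (Lc * (1 / (2 * (Lc + 1)))); [apply Rmult_le_compat_l; lra|].
    replace (Lc * (1 / (2 * (Lc + 1)))) with (1 / 2 * (Lc / (Lc + 1))) by (field; lra).
    assert (Lc / (Lc + 1) <= 1).
    { apply (Rmult_le_reg_r (Lc + 1)); [lra|]. unfold Rdiv. rewrite Rmult_assoc, Rinv_l by lra. lra. }
    lra. }
  assert (hvT : v * T <= h0 / 2).
  { apply Rle_trans with (v * (h0 / (2 * (v + 1)))); [apply Rmult_le_compat_l; lra|].
    replace (v * (h0 / (2 * (v + 1)))) with (h0 / 2 * (v / (v + 1))) by (field; lra).
    assert (v / (v + 1) <= 1).
    { apply (Rmult_le_reg_r (v + 1)); [lra|]. unfold Rdiv. rewrite Rmult_assoc, Rinv_l by lra. lra. }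
    assert (0 < h0 / 2) by lra. nra. }
  exists T, (exp (- (1 / (dl0 * dl0)))), (6 * Dc * T + 1).
  split; [auto|split; [apply exp_pos|split; [nra|]]].
  intros eps heps heps1.
  destruct (lnabs_facts eps (exp (- (1 / (dl0 * dl0)))) ltac:(lra) ltac:(lra) heps1 (exp_pos _)) as [hL hL2].
  rewrite ln_exp in hL2.
  set (L := lnabs eps) in *.
  set (s := sqrt L).
  assert (hs : 0 < s) by (apply sqrt_lt_R0; auto).
  assert (hss : L = s * s) by (unfold s; rewrite sqrt_sqrt; lra).
  set (dl := 1 / s).
  assert (hdl : 0 < dl) by (unfold dl; apply Rdiv_lt_0_compat; lra).
  assert (hdldl0 : dl <= dl0).
  { assert (1 / dl0 <= s).
    { destruct (Rle_dec (1 / dl0) s) as [h|h]; auto. exfalso.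
      assert (0 < 1 / dl0) by (apply Rdiv_lt_0_compat; lra).
      assert (s * s < 1 / dl0 * (1 / dl0)) by nra.
      replace (1 / dl0 * (1 / dl0)) with (1 / (dl0 * dl0)) in H0 by (field; lra). lra. }
    assert (h1 : 1 <= dl0 * s).
    { apply (Rmult_le_compat_l dl0) in H; [|lra]. replace (dl0 * (1 / dl0)) with 1 in H by (field; lra). lra. }
    unfold dl. replace dl0 with ((dl0 * s) * (1 / s)) by (field; lra).
    rewrite <- (Rmult_1_l (1 / s)) at 1. apply Rmult_le_compat_r; [apply Rlt_le, Rdiv_lt_0_compat; lra|lra]. }
  assert (hP : params N Y0 gamma rs m dd Rb dl).
  { repeat split; auto; try lra. apply Rle_trans with (dl0 * Rb); [apply Rmult_le_compat_r; lra|auto]. }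
  assert (hP0 : params N Y0 gamma rs m dd Rb 0).
  { repeat split; auto; try lra. }
  pose proof (fieldOK_Gd N Y0 gamma rs m dd Rb dl hP) as hF. fold M Lc in hF.
  pose proof (fieldOK_Gd N Y0 gamma rs m dd Rb 0 hP0) as hF0. fold M Lc in hF0.
  assert (hsd : sqrt (lnabs eps) = s) by reflexivity.
  split; [|split].
  - destruct (ode_exists N Y0 dd M Lc (Gd N gamma rs dl) T hF ltac:(lra) ltac:(lra) ltac:(lra) ltac:(lra) ltac:(lra) hLT)
      as [Y [Y0e [YK [Yc Yd]]]].
    exists (fun i t => toX zs rs (gamma / (4 * PI * rs)) (sqrt (lnabs eps)) t (fun j => Y j t) i).
    apply (Y_to_X N T gamma eps zs rs Y0 dd m Rb Y); auto.
    split; auto.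
  - destruct (ode_exists N Y0 dd M Lc (Gd N gamma rs 0) T hF0 ltac:(lra) ltac:(lra) ltac:(lra) ltac:(lra) ltac:(lra) hLT)
      as [Y [Y0e [YK [Yc Yd]]]].
    exists Y. apply (Yt_sol N T gamma rs Y0 dd m Y); auto.
    split; auto.
  - intros X Yt HX HYt t i ht hi.
    pose proof (X_to_Y N T gamma eps zs rs Y0 X hrs hL HX) as TX.
    set (Yx := toY zs rs (gamma / (4 * PI * rs)) (sqrt (lnabs eps)) X) in TX.
    pose proof (Yt_traj N T gamma rs Y0 Yt hrs HYt) as TY.
    pose proof (apriori_K N T (Gd N gamma rs dl) Y0 dd M Yx ltac:(lra) ltac:(lra) hMT (proj1 hF) TX) as YxK.
    pose proof (apriori_K N T (Gd N gamma rs 0) Y0 dd M Yt ltac:(lra) ltac:(lra) hMT (proj1 hF0) TY) as YtK.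
    assert (YxK' : forall t, 0 <= t <= T -> inK N Y0 dd (fun j => Yx j t)) by (intros; apply (inK_mono N Y0 (M * T)); [lra|auto]).
    assert (YtK' : forall t, 0 <= t <= T -> inK N Y0 dd (fun j => Yt j t)) by (intros; apply (inK_mono N Y0 (M * T)); [lra|auto]).
    assert (hcT : 0 < Dc * dl * T) by (apply Rmult_lt_0_compat; [apply Rmult_lt_0_compat|]; lra).
    pose proof (apriori_diff N T (Gd N gamma rs dl) (Gd N gamma rs 0) Y0 dd Lc (Dc * dl) Yx Yt ltac:(lra) ltac:(lra) hLT hcT
                 (proj2 hF) (fun A hA => Gd_dl N Y0 gamma rs m dd Rb dl A hP hA) TX TY YxK' YtK' t ht) as Dif.
    destruct (Dif i hi) as [df1 df2].
    destruct (YxK t ht i hi) as [yx1 yx2]. destruct (YtK t ht i hi) as [yt1 yt2].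
    specialize (HRb2 i hi).
    rewrite <- (toX_toY zs rs (gamma / (4 * PI * rs)) (sqrt (lnabs eps)) X t i) by auto.
    fold Yx. unfold toX, Xtilde, X0eps; cbn [fst snd].
    fold v. rewrite hsd.
    assert (hvt : 0 <= v * t <= h0 / 2).
    { split; [apply Rmult_le_pos; lra|]. apply Rle_trans with (v * T); [apply Rmult_le_compat_l; lra|auto]. }
    assert (hRs : Rb / s <= h0 / 2).
    { replace (Rb / s) with (dl * Rb) by (unfold dl; field; lra).
      apply Rle_trans with (dl0 * Rb); [apply Rmult_le_compat_r; lra|auto]. }
    split; [|split].
    + apply (inA_toX zs rs v s t eps (Yx i t) (Y0 i) dd h0 Rb); auto; try lra.
      revert yx1 HRb2. split_Rabs; lra.
    + apply (inA_toX zs rs v s t eps (Yt i t) (Y0 i) dd h0 Rb); auto; try lra.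
      revert yt1 HRb2. split_Rabs; lra.
    + eapply Rle_trans; [apply dist2_le|].
      pose proof (toX_diff zs (3 * (Dc * dl) * T) (v * t) s (fst (Yx i t)) (fst (Yt i t)) hs df1) as e1.
      pose proof (toX_diff rs (3 * (Dc * dl) * T) 0 s (snd (Yx i t)) (snd (Yt i t)) hs df2) as e2.
      rewrite !Rplus_0_r in e2.
      assert (E : 3 * (Dc * dl) * T / s + 3 * (Dc * dl) * T / s = 6 * Dc * T / L) by (rewrite hss; unfold dl; field; lra).
      assert (6 * Dc * T / L <= (6 * Dc * T + 1) / L).
      { unfold Rdiv. apply Rmult_le_compat_r; [apply Rlt_le, Rinv_0_lt_compat; lra|lra]. }
      lra.
Qed.
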